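(* Let $k$ be a commutative ring over which every finitely generated projective module is free, and let $A$ be a $k$-linear semi-Hopf category with object set $X$ such that every $A_{x,y}$ is finitely generated projective. The following are equivalent: (a) $A$ is Hopf and has a non-singular right integral family; (b) $A$ has both a non-singular right integral family and a non-singular left integral family; (c) $A$ is Hopf and Frobenius; (d) $A$ is Hopf and $\int^\ell_{A,x}\cong k$ for all $x\in X$; (e) $A$ has a right non-singular left integral family, and for all $x,y\in X$ with $A_{x,y}\neq0$ the modules $A_{x,y}$ and $A_{y,y}$ have the same rank; (f) $A$ is Hopf.
   Context: $k$-linear category $A$ with object set $X$: $k$-modules $A_{x,y}$, compositions $m_{xyz}\colon A_{x,y}\otimes A_{y,z}\to A_{x,z}$ and units $j_x\colon k\to A_{x,x}$ (write $1_x=j_x(1)$), associative and unital. Semi-Hopf: each $A_{x,y}$ is a $k$-coalgebra $(\delta_{xy},\epsilon_{xy})$ with all $m_{xyz},j_x$ coalgebra morphisms. Hopf: $k$-linear $s_{xy}\colon A_{x,y}\to A_{y,x}$ with $a_{(1)}s_{xy}(a_{(2)})=\epsilon_{xy}(a)1_x$ and $s_{xy}(a_{(1)})a_{(2)}=\epsilon_{xy}(a)1_y$ for $a\in A_{x,y}$. $A^*_{x,y}=\mathrm{Hom}_k(A_{x,y},k)$. Left integral family: elements $t^{xy}\in A_{x,y}$ with $a\,t^{xy}=\epsilon_{zx}(a)t^{zy}$ for all $z$ and $a\in A_{z,x}$; right integral family: $t^{xy}\,a=\epsilon_{yz}(a)t^{xz}$ for all $z$, $a\in A_{y,z}$. For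 such $t$: $p_{xy}(f)=f(t^{xy}_{(1)})\,t^{xy}_{(2)}$ and $q_{xy}(f)=t^{xy}_{(1)}\,f(t^{xy}_{(2)})$ for $f\in A^*_{x,y}$. $t$ is left non-singular if each $p_{xx}$ is a split epimorphism, right non-singular if each $q_{xx}$ is, non-singular if both. Casimir family: $e^{xy}\in A_{x,y}\otimes A_{y,x}$ with $(m_{zxy}\otimes1)(a\otimes e^{xy})=(1\otimes m_{yzx})(e^{zy}\otimes a)$ for all $x,y,z$, $a\in A_{z,x}$. Frobenius system: Casimir family $e$ plus linear $\nu_x\colon A_{x,x}\to k$ with $(\nu_x\otimes1)(e^{xx})=1_x=(1\otimes\nu_x)(e^{xx})$; $A$ is Frobenius if it admits one. $\int^\ell_{A,z}$ is the $k$-module of families $(t_y)_{y\in X}$, $t_y\in A_{y,z}$, with $a\,t_y=\epsilon_{xy}(a)t_x$ for all $x,y$ and $a\in A_{x,y}$. *)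

(* Defs.v *)
From HB Require Import structures.
From mathcomp Require Import all_boot all_order all_algebra.
Set Implicit Arguments. Unset Strict Implicit. Unset Printing Implicit Defensive.
Import GRing.Theory.
Local Open Scope ring_scope.

Section Defs.
Variable k : comPzRingType.

Definition klinear (M N : lmodType k) (f : M -> N) : Prop :=
  forall (c : k) (a b : M), f (c *: a + b) = c *: f a + f b.
Definition kform (M : lmodType k) (f : M -> k) : Prop :=
  forall (c : k) (a b : M), f (c *: a + b) = c * f a + f b.
Definition kbilinear (M N P : lmodType k) (b : M -> N -> P) : Prop :=
  (forall n, klinear (fun m => b m n)) /\ (forall m, klinear (b m)).
Definition ktrilinear (M N O P : lmodType k) (b : M -> N -> O -> P) : Prop :=
  (forall n o, klinear (fun m => b m n o)) /\ (forall m o, klinear (fun n => b m n o))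
  /\ (forall m n, klinear (b m n)).

(* Elements of M (x) N are represented by finite formal sums sum_i m_i (x) n_i
   (lists of pairs); two such sums are equal in M (x) N iff every k-bilinear
   map out of M x N takes the same value on them (universal property). *)
Definition teq2 (M N : lmodType k) (s t : seq (M * N)) : Prop :=
  forall (P : lmodType k) (b : M -> N -> P), kbilinear b ->
    \sum_(p <- s) b p.1 p.2 = \sum_(p <- t) b p.1 p.2.
Definition teq3 (M N O : lmodType k) (s t : seq (M * N * O)) : Prop :=
  forall (P : lmodType k) (b : M -> N -> O -> P), ktrilinear b ->
    \sum_(p <- s) b p.1.1 p.1.2 p.2 = \sum_(p <- t) b p.1.1 p.1.2 p.2.

(* finitely generated projective = direct summand of some k^n *)
Definition fg_projective (M : lmodType k) : Prop :=
  exists n (i : M -> 'rV[k]_n) (p : 'rV[k]_n -> M),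
    klinear i /\ klinear p /\ forall a, p (i a) = a.
Definition has_rank (M : lmodType k) (n : nat) : Prop :=
  exists f : 'rV[k]_n -> M, klinear f /\ bijective f.
(* free (of finite rank; a finitely generated free module has a finite basis) *)
Definition free_fin (M : lmodType k) : Prop := exists n, has_rank M n.

Local Unset Implicit Arguments.
Record semiHopfCat (X : Type) := SemiHopfCat {
  Ahom : X -> X -> lmodType k;
  comp : forall x y z, Ahom x y -> Ahom y z -> Ahom x z;
  idm : forall x, Ahom x x;
  cmul : forall x y, Ahom x y -> seq (Ahom x y * Ahom x y);
  counit : forall x y, Ahom x y -> k;
  comp_bilin : forall x y z, kbilinear (comp x y z);
  compA : forall x y z w (a : Ahom x y) (b : Ahom y z) (c : Ahom z w),
    comp x z w (comp x y z a b) c = comp x y w a (comp y z w b c);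
  comp1m : forall x y (a : Ahom x y), comp x x y (idm x) a = a;
  compm1 : forall x y (a : Ahom x y), comp x y y a (idm y) = a;
  cmul_lin : forall x y (c : k) (a b : Ahom x y),
    teq2 (cmul x y (c *: a + b))
         ([seq (c *: p.1, p.2) | p <- cmul x y a] ++ cmul x y b);
  counit_lin : forall x y, kform (counit x y);
  coassoc : forall x y (a : Ahom x y),
    teq3 [seq (q.1, q.2, p.2) | p <- cmul x y a, q <- cmul x y p.1]
         [seq (p.1, q.1, q.2) | p <- cmul x y a, q <- cmul x y p.2];
  counitL : forall x y (a : Ahom x y),
    \sum_(p <- cmul x y a) counit x y p.1 *: p.2 = a;
  counitR : forall x y (a : Ahom x y),
    \sum_(p <- cmul x y a) counit x y p.2 *: p.1 = a;
  comp_cmul : forall x y z (a : Ahom x y) (b : Ahom y z),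
    teq2 (cmul x z (comp x y z a b))
         [seq (comp x y z p.1 q.1, comp x y z p.2 q.2) | p <- cmul x y a, q <- cmul y z b];
  comp_counit : forall x y z (a : Ahom x y) (b : Ahom y z),
    counit x z (comp x y z a b) = counit x y a * counit y z b;
  idm_cmul : forall x, teq2 (cmul x x (idm x)) [:: (idm x, idm x)];
  idm_counit : forall x, counit x x (idm x) = 1
}.
Local Set Implicit Arguments.
End Defs.
Arguments Ahom {k X}. Arguments comp {k X}. Arguments idm {k X}. Arguments cmul {k X}. Arguments counit {k X}.

Section Defs2.
Variable k : comPzRingType.

Variables (X : Type) (C : semiHopfCat k X).
Local Notation A := (Ahom C).
Local Notation m := (comp C _ _ _).
Local Notation del := (cmul C _ _).
Local Notation eps := (counit C _ _).

Definition is_Hopf : Prop :=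
  exists s : forall x y, A x y -> A y x,
    (forall x y, klinear (s x y)) /\
    (forall x y (a : A x y), \sum_(p <- del a) m p.1 (s x y p.2) = eps a *: idm C x) /\
    (forall x y (a : A x y), \sum_(p <- del a) m (s x y p.1) p.2 = eps a *: idm C y).

Definition left_integral (t : forall x y, A x y) : Prop :=
  forall x y z (a : A z x), m a (t x y) = eps a *: t z y.
Definition right_integral (t : forall x y, A x y) : Prop :=
  forall x y z (a : A y z), m (t x y) a = eps a *: t x z.

(* p_{xx}(f) = f(t_(1)) t_(2) is a split epimorphism A*_{x,x} -> A_{x,x}:
   there is a k-linear g : A_{x,x} -> A*_{x,x} with p_{xx} o g = id *)
Definition left_nonsingular (t : forall x y, A x y) : Prop :=
  forall x, exists g : A x x -> A x x -> k,
    (forall a, kform (g a)) /\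
    (forall c a b u, g (c *: a + b) u = c * g a u + g b u) /\
    (forall a, \sum_(p <- del (t x x)) g a p.1 *: p.2 = a).
(* q_{xx}(f) = t_(1) f(t_(2)) is a split epimorphism *)
Definition right_nonsingular (t : forall x y, A x y) : Prop :=
  forall x, exists g : A x x -> A x x -> k,
    (forall a, kform (g a)) /\
    (forall c a b u, g (c *: a + b) u = c * g a u + g b u) /\
    (forall a, \sum_(p <- del (t x x)) g a p.2 *: p.1 = a).
Definition nonsingular t := left_nonsingular t /\ right_nonsingular t.

Definition casimir (e : forall x y, seq (A x y * A y x)) : Prop :=
  forall x y z (a : A z x),
    teq2 [seq (m a p.1, p.2) | p <- e x y] [seq (p.1, m p.2 a) | p <- e z y].

Definition is_Frobenius : Prop :=
  exists (e : forall x y, seq (A x y * A y x)) (nu : forall x, A x x -> k),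
    casimir e /\ (forall x, kform (nu x)) /\
    (forall x, \sum_(p <- e x x) nu x p.1 *: p.2 = idm C x) /\
    (forall x, \sum_(p <- e x x) nu x p.2 *: p.1 = idm C x).

Definition in_lint (z : X) (t : forall y, A y z) : Prop :=
  forall x y (a : A x y), m a (t y) = eps a *: t x.
(* int^l_{A,z} is isomorphic to k: some t0 such that c |-> c t0 is a
   k-linear bijection k -> int^l_{A,z} (every k-linear map k -> int is of this form) *)
Definition lint_iso_k (z : X) : Prop :=
  exists t0 : forall y, A y z, in_lint t0 /\
    (forall t, in_lint t -> exists c : k, forall y, t y = c *: t0 y) /\
    (forall c : k, (forall y, c *: t0 y = 0) -> c = 0).

Definition same_rank_cond : Prop :=
  forall x y, (exists a : A x y, a != 0) ->
    exists n, has_rank (A x y) n /\ has_rank (A y y) n.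

End Defs2.
Arguments is_Hopf {k X} C. Arguments left_integral {k X} C t. Arguments right_integral {k X} C t.
Arguments left_nonsingular {k X} C t. Arguments right_nonsingular {k X} C t.
Arguments nonsingular {k X} C t. Arguments casimir {k X} C e. Arguments is_Frobenius {k X} C.
Arguments in_lint {k X} C z t. Arguments lint_iso_k {k X} C z. Arguments same_rank_cond {k X} C.

(* Main.v *)
From HB Require Import structures.
From mathcomp Require Import all_boot all_order all_algebra.
From mathcomp Require Import ring.
From Stdlib Require Import IndefiniteDescription FunctionalExtensionality.
Require Import Defs.
Set Implicit Arguments. Unset Strict Implicit. Unset Printing Implicit Defensive.
Import GRing.Theory.
Local Open Scope ring_scope.


Section Lin.
Variable k : comPzRingType.
Implicit Types M N P : lmodType k.

Lemma klin0 M N (f : M -> N) : klinear f -> f 0 = 0.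
Proof.
move=> h; have e := h 1 0 0; rewrite !scale1r addr0 in e.
have e2 := congr1 (fun v => v - f 0) e; rewrite /= subrr addrK in e2; by rewrite -e2.
Qed.

Lemma klinD M N (f : M -> N) : klinear f -> forall a b, f (a + b) = f a + f b.
Proof. by move=> h a b; rewrite -[a]scale1r h !scale1r. Qed.

Lemma klinZ M N (f : M -> N) : klinear f -> forall c a, f (c *: a) = c *: f a.
Proof. by move=> h c a; rewrite -[c *: a]addr0 h klin0 // addr0. Qed.

Lemma klinN M N (f : M -> N) : klinear f -> forall a, f (- a) = - f a.
Proof. by move=> h a; rewrite -scaleN1r klinZ // scaleN1r. Qed.

Lemma klinB M N (f : M -> N) : klinear f -> forall a b, f (a - b) = f a - f b.
Proof. by move=> h a b; rewrite klinD // klinN. Qed.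

Lemma klin_sum M N (f : M -> N) : klinear f ->
  forall I (r : seq I) (P : pred I) (F : I -> M),
  f (\sum_(i <- r | P i) F i) = \sum_(i <- r | P i) f (F i).
Proof.
move=> h I r P F; elim: r => [|i r IH]; first by rewrite !big_nil klin0.
rewrite !big_cons; case: (P i) => //; by rewrite klinD // IH.
Qed.

Lemma klinear_comp M N P (f : M -> N) (g : N -> P) :
  klinear f -> klinear g -> klinear (fun x => g (f x)).
Proof. by move=> hf hg c a b; rewrite hf hg. Qed.

Lemma klinear_id M : klinear (fun x : M => x).
Proof. by []. Qed.

Lemma kform0 M (f : M -> k) : kform f -> f 0 = 0.
Proof.
move=> h; have e := h 1 0 0; rewrite !scale1r addr0 mul1r in e.
have e2 := congr1 (fun v => v - f 0) e; rewrite /= subrr addrK in e2; by rewrite -e2.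
Qed.

Lemma kformD M (f : M -> k) : kform f -> forall a b, f (a + b) = f a + f b.
Proof. by move=> h a b; rewrite -[a]scale1r h !scale1r mul1r. Qed.

Lemma kformZ M (f : M -> k) : kform f -> forall c a, f (c *: a) = c * f a.
Proof. by move=> h c a; rewrite -[c *: a]addr0 h kform0 // addr0. Qed.

Lemma kform_sum M (f : M -> k) : kform f ->
  forall I (r : seq I) (P : pred I) (F : I -> M),
  f (\sum_(i <- r | P i) F i) = \sum_(i <- r | P i) f (F i).
Proof.
move=> h I r P F; elim: r => [|i r IH]; first by rewrite !big_nil kform0.
rewrite !big_cons; case: (P i) => //; by rewrite kformD // IH.
Qed.

Lemma kformN M (f : M -> k) : kform f -> forall a, f (- a) = - f a.
Proof. by move=> h a; rewrite -scaleN1r kformZ // mulN1r. Qed.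

Lemma kformB M (f : M -> k) : kform f -> forall a b, f (a - b) = f a - f b.
Proof. by move=> h a b; rewrite kformD // kformN. Qed.

Lemma klinear_inv M N (f : M -> N) (g : N -> M) :
  klinear f -> cancel f g -> cancel g f -> klinear g.
Proof.
move=> hf fK gK c a b; apply: (can_inj fK).
by rewrite hf !gK.
Qed.

Lemma triv_eq0 M (h : (1 : k) = 0) (v : M) : v = 0.
Proof. by rewrite -[v]scale1r h scale0r. Qed.

Lemma mul_rV_klin1 m n (f : 'rV[k]_m -> 'rV[k]_n) (hf : klinear f) u :
  u *m lin1_mx f = f u.
Proof.
rewrite [u in RHS]matrix_sum_delta big_ord1 (klin_sum hf); apply/rowP=> i.
rewrite mxE summxE; apply: eq_bigr => j _; rewrite klinZ // !mxE.
by [].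
Qed.

Lemma lin_comp1 n (f g : 'rV[k]_n -> 'rV[k]_n) :
  klinear f -> klinear g -> (forall v, f (g v) = v) -> forall v, g (f v) = v.
Proof.
move=> hf hg fg.
have e : lin1_mx g *m lin1_mx f = 1%:M.
  apply/row_matrixP => i; rewrite row_mul rowE mul_rV_klin1 // mul_rV_klin1 //.
  by rewrite fg rowE mulmx1.
have e2 := mulmx1C e.
move=> v; by rewrite -(mul_rV_klin1 hf) -(mul_rV_klin1 hg) -mulmxA e2 mulmx1.
Qed.

Lemma rank_surj_inj M N n (L : M -> N) (R : N -> M) :
  has_rank M n -> has_rank N n -> klinear L -> klinear R ->
  (forall v, L (R v) = v) -> forall u, R (L u) = u.
Proof.
move=> [a [ha [a' aK a'K]]] [b [hb [b' bK b'K]]] hL hR LR u.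
have ha' := klinear_inv ha aK a'K; have hb' := klinear_inv hb bK b'K.
pose f := fun v => b' (L (a v)). pose g := fun v => a' (R (b v)).
have hf : klinear f by do 2 apply: klinear_comp => //.
have hg : klinear g by do 2 apply: klinear_comp => //.
have fg : forall v, f (g v) = v by move=> v; rewrite /f /g a'K LR bK.
have := lin_comp1 hf hg fg (a' u); rewrite /f /g a'K b'K => e.
exact: (can_inj a'K).
Qed.

End Lin.

Section Rank.
Variable k : comPzRingType.

Lemma split_inj_le_mx b c (L : 'rV[k]_(b + c.+1) -> 'rV[k]_b) R :
  klinear L -> klinear R -> (forall v, R (L v) = v) -> (1 : k) = 0.
Proof.
move=> hL hR RL.
pose ML := lin1_mx L. pose MR := lin1_mx R.
have e : ML *m MR = 1%:M.
  apply/row_matrixP => i; rewrite row_mul rowE mul_rV_klin1 // mul_rV_klin1 //.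
  by rewrite RL rowE mulmx1.
pose N1 : 'M[k]_(b + c.+1) := row_mx ML 0.
pose N2 : 'M[k]_(b + c.+1) := col_mx MR 0.
have e2 : N1 *m N2 = 1%:M by rewrite mul_row_col mul0mx addr0.
have d1 : \det N1 = 0.
  rewrite (expand_det_col _ (rshift b ord_max)) big1 // => i _.
  by rewrite row_mxEr mxE mul0r.
have := congr1 determinant e2; by rewrite det_mulmx d1 mul0r det1.
Qed.

Lemma split_inj_le a b (L : 'rV[k]_a -> 'rV[k]_b) R :
  klinear L -> klinear R -> (forall v, R (L v) = v) -> (1 : k) != 0 -> (a <= b)%N.
Proof.
move=> hL hR RL nz; case: (leqP a b) => // ba.
have [c ec] : exists c, a = (b + c.+1)%N by exists (a - b.+1)%N; rewrite addnS -addSn subnKC.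
subst a; by rewrite (split_inj_le_mx hL hR RL) eqxx in nz.
Qed.

Lemma has_rank_split_le (M N : lmodType k) a b (L : M -> N) (R : N -> M) :
  has_rank M a -> has_rank N b -> klinear L -> klinear R ->
  (forall v, R (L v) = v) -> (1 : k) != 0 -> (a <= b)%N.
Proof.
move=> [f [hf [f' fK f'K]]] [g [hg [g' gK g'K]]] hL hR RL nz.
have hf' := klinear_inv hf fK f'K; have hg' := klinear_inv hg gK g'K.
apply: (@split_inj_le a b (fun v => g' (L (f v))) (fun w => f' (R (g w)))) => //.
- by do 2 apply: klinear_comp.
- by do 2 apply: klinear_comp.
- by move=> v; rewrite g'K RL fK.
Qed.

Lemma has_rank_iso_eq (M N : lmodType k) a b (L : M -> N) (R : N -> M) :
  has_rank M a -> has_rank N b -> klinear L -> klinear R ->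
  (forall v, R (L v) = v) -> (forall w, L (R w) = w) -> (1 : k) != 0 -> a = b.
Proof.
move=> ha hb hL hR RL LR nz; apply/eqP; rewrite eqn_leq.
by rewrite (has_rank_split_le ha hb hL hR RL nz) (has_rank_split_le hb ha hR hL LR nz).
Qed.

End Rank.

Section Sw.
Variables (k : comPzRingType) (X : Type) (C : semiHopfCat k X).
Local Notation A := (Ahom C).

Section Comp.
Variables x y z : X.
Implicit Types (a : A x y) (b : A y z).
Lemma compDl a a' b : comp C x y z (a + a') b = comp C x y z a b + comp C x y z a' b.
Proof. exact: (klinD ((comp_bilin _ _ C x y z).1 b) a a'). Qed.
Lemma compZl c a b : comp C x y z (c *: a) b = c *: comp C x y z a b.
Proof. exact: (klinZ ((comp_bilin _ _ C x y z).1 b) c a). Qed.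
Lemma comp0l b : comp C x y z 0 b = 0.
Proof. exact: (klin0 ((comp_bilin _ _ C x y z).1 b)). Qed.
Lemma compNl a b : comp C x y z (- a) b = - comp C x y z a b.
Proof. exact: (klinN ((comp_bilin _ _ C x y z).1 b) a). Qed.
Lemma comp_suml I (r : seq I) (P : pred I) (F : I -> A x y) b :
  comp C x y z (\sum_(i <- r | P i) F i) b = \sum_(i <- r | P i) comp C x y z (F i) b.
Proof. exact: (klin_sum ((comp_bilin _ _ C x y z).1 b) r P F). Qed.
Lemma compDr a b b' : comp C x y z a (b + b') = comp C x y z a b + comp C x y z a b'.
Proof. exact: (klinD ((comp_bilin _ _ C x y z).2 a) b b'). Qed.
Lemma compZr c a b : comp C x y z a (c *: b) = c *: comp C x y z a b.
Proof. exact: (klinZ ((comp_bilin _ _ C x y z).2 a) c b). Qed.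
Lemma comp0r a : comp C x y z a 0 = 0.
Proof. exact: (klin0 ((comp_bilin _ _ C x y z).2 a)). Qed.
Lemma compNr a b : comp C x y z a (- b) = - comp C x y z a b.
Proof. exact: (klinN ((comp_bilin _ _ C x y z).2 a) b). Qed.
Lemma comp_sumr I (r : seq I) (P : pred I) (F : I -> A y z) a :
  comp C x y z a (\sum_(i <- r | P i) F i) = \sum_(i <- r | P i) comp C x y z a (F i).
Proof. exact: (klin_sum ((comp_bilin _ _ C x y z).2 a) r P F). Qed.
Lemma klin_compl b : klinear (fun a => comp C x y z a b).
Proof. exact: (comp_bilin _ _ C x y z).1. Qed.
Lemma klin_compr a : klinear (comp C x y z a).
Proof. exact: (comp_bilin _ _ C x y z).2. Qed.
End Comp.

Section Coalg.
Variables x y : X.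
Implicit Types a : A x y.
Lemma epsD a a' : counit C x y (a + a') = counit C x y a + counit C x y a'.
Proof. exact: (kformD (counit_lin _ _ C x y)). Qed.
Lemma epsZ c a : counit C x y (c *: a) = c * counit C x y a.
Proof. exact: (kformZ (counit_lin _ _ C x y)). Qed.
Lemma eps0 : counit C x y 0 = 0.
Proof. exact: (kform0 (counit_lin _ _ C x y)). Qed.
Lemma eps_sum I (r : seq I) (P : pred I) (F : I -> A x y) :
  counit C x y (\sum_(i <- r | P i) F i) = \sum_(i <- r | P i) counit C x y (F i).
Proof. exact: (kform_sum (counit_lin _ _ C x y)). Qed.

Lemma sw_lin (P : lmodType k) (F : A x y -> A x y -> P) : kbilinear F ->
  klinear (fun a => \sum_(p <- cmul C x y a) F p.1 p.2).
Proof.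
move=> hF c a b /=; rewrite (cmul_lin _ _ C x y c a b P F hF) big_cat big_map /=.
congr (_ + _); rewrite scaler_sumr; apply: eq_bigr => p _.
by rewrite (klinZ (hF.1 _)).
Qed.

Lemma swD (P : lmodType k) (F : A x y -> A x y -> P) : kbilinear F -> forall a a',
  \sum_(p <- cmul C x y (a + a')) F p.1 p.2 =
  \sum_(p <- cmul C x y a) F p.1 p.2 + \sum_(p <- cmul C x y a') F p.1 p.2.
Proof. move=> hF a a'; exact: (klinD (sw_lin hF) a a'). Qed.
Lemma swZ (P : lmodType k) (F : A x y -> A x y -> P) : kbilinear F -> forall c a,
  \sum_(p <- cmul C x y (c *: a)) F p.1 p.2 = c *: \sum_(p <- cmul C x y a) F p.1 p.2.
Proof. move=> hF c a; exact: (klinZ (sw_lin hF) c a). Qed.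
Lemma sw0 (P : lmodType k) (F : A x y -> A x y -> P) : kbilinear F ->
  \sum_(p <- cmul C x y 0) F p.1 p.2 = 0.
Proof. move=> hF; exact: (klin0 (sw_lin hF)). Qed.
Lemma sw_sum (P : lmodType k) (F : A x y -> A x y -> P) : kbilinear F ->
  forall I (r : seq I) (Q : pred I) (G : I -> A x y),
  \sum_(p <- cmul C x y (\sum_(i <- r | Q i) G i)) F p.1 p.2 =
  \sum_(i <- r | Q i) \sum_(p <- cmul C x y (G i)) F p.1 p.2.
Proof. move=> hF I r Q G; exact: (klin_sum (sw_lin hF) r Q G). Qed.

Lemma coassoc3 (P : lmodType k) (F : A x y -> A x y -> A x y -> P) : ktrilinear F ->
  forall a, \sum_(p <- cmul C x y a) \sum_(q <- cmul C x y p.1) F q.1 q.2 p.2 =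
            \sum_(p <- cmul C x y a) \sum_(q <- cmul C x y p.2) F p.1 q.1 q.2.
Proof.
move=> hF a; have := coassoc _ _ C x y a P F hF; rewrite !big_allpairs_dep /=.
done.
Qed.

Lemma counitL' a : \sum_(p <- cmul C x y a) counit C x y p.1 *: p.2 = a.
Proof. exact: counitL. Qed.
Lemma counitR' a : \sum_(p <- cmul C x y a) counit C x y p.2 *: p.1 = a.
Proof. exact: counitR. Qed.

Lemma sw_epsL (P : lmodType k) (G : A x y -> P) : klinear G -> forall a,
  \sum_(p <- cmul C x y a) counit C x y p.1 *: G p.2 = G a.
Proof.
move=> hG a; rewrite -[in RHS](counitL' a) (klin_sum hG); apply: eq_bigr => p _.
by rewrite klinZ.
Qed.
Lemma sw_epsR (P : lmodType k) (G : A x y -> P) : klinear G -> forall a,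
  \sum_(p <- cmul C x y a) counit C x y p.2 *: G p.1 = G a.
Proof.
move=> hG a; rewrite -[in RHS](counitR' a) (klin_sum hG); apply: eq_bigr => p _.
by rewrite klinZ.
Qed.
End Coalg.

Lemma comp_cmul' x y z (P : lmodType k) (F : A x z -> A x z -> P) :
  kbilinear F -> forall (a : A x y) (b : A y z),
  \sum_(p <- cmul C x z (comp C x y z a b)) F p.1 p.2 =
  \sum_(p <- cmul C x y a) \sum_(q <- cmul C y z b) F (comp C x y z p.1 q.1) (comp C x y z p.2 q.2).
Proof. move=> hF a b; by rewrite (comp_cmul _ _ C x y z a b P F hF) big_allpairs_dep. Qed.

Lemma idm_cmul' x (P : lmodType k) (F : A x x -> A x x -> P) : kbilinear F ->
  \sum_(p <- cmul C x x (idm C x)) F p.1 p.2 = F (idm C x) (idm C x).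
Proof. move=> hF; by rewrite (idm_cmul _ _ C x P F hF) big_seq1. Qed.

End Sw.

Ltac lin_sums := repeat (rewrite ?scaler_sumr -?big_split /=; apply: eq_bigr => ? _).

Section Hopf.
Variables (k : comPzRingType) (X : Type) (C : semiHopfCat k X).
Local Notation A := (Ahom C).
Local Notation m := (comp C _ _ _).
Variable s : forall x y, A x y -> A y x.
Hypothesis hs : forall x y, klinear (@s x y).
Hypothesis hsL : forall x y (a : A x y),
  \sum_(p <- cmul C x y a) m p.1 (s p.2) = counit C x y a *: idm C x.
Hypothesis hsR : forall x y (a : A x y),
  \sum_(p <- cmul C x y a) m (s p.1) p.2 = counit C x y a *: idm C y.

Lemma sD x y (a b : A x y) : s (a + b) = s a + s b.
Proof. exact: (klinD (@hs x y) a b). Qed.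
Lemma sZ x y c (a : A x y) : s (c *: a) = c *: s a.
Proof. exact: (klinZ (@hs x y) c a). Qed.
Lemma s0 x y : @s x y 0 = 0.
Proof. exact: (klin0 (@hs x y)). Qed.

Ltac linsimp_P3 := rewrite /= ?(compDl, compZl, compDr, compZr, sD, sZ, epsD, epsZ,
  scalerDr, scalerDl, scalerA, mulrDl, mulrDr, mulrA); try done.

Lemma bil_sm x y z : kbilinear (fun (u : A y x) (v : A y z) => m (s u) v).
Proof. split=> [v|u] c a b; linsimp_P3. Qed.
Lemma bil_ms x y z : kbilinear (fun (u : A x y) (v : A z y) => m u (s v)).
Proof. split=> [v|u] c a b; linsimp_P3. Qed.

Lemma s1 x : s (idm C x) = idm C x.
Proof.
have := hsR (idm C x); rewrite (idm_cmul' (F := fun u v => m (s u) v)) ?idm_counit ?scale1r ?compm1 //.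
exact: bil_sm.
Qed.

Lemma sw_epsL_form x y (G : A x y -> k) : kform G -> forall a,
  \sum_(p <- cmul C x y a) counit C x y p.1 * G p.2 = G a.
Proof.
move=> hG a; rewrite -[in RHS](counitL _ _ C x y a) (kform_sum hG); apply: eq_bigr => p _.
by rewrite kformZ.
Qed.

Lemma eps_s x y (a : A x y) : counit C y x (s a) = counit C x y a.
Proof.
have := congr1 (counit C x x) (hsL a); rewrite epsZ idm_counit mulr1 eps_sum => <-.
rewrite -[in LHS](sw_epsL_form (G := fun u => counit C y x (s u))) //.
  by apply: eq_bigr => p _; rewrite comp_counit.
by move=> c u v; rewrite sD sZ epsD epsZ.
Qed.


Lemma s_anti x y z (a : A x y) (b : A y z) : s (m a b) = m (s b) (s a).
Proof.
have FM : forall (u : A x y) (v : A y z),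
  \sum_(p <- cmul C x y u) \sum_(q <- cmul C y z v) m (s (m p.1 q.1)) (m p.2 q.2)
  = (counit C x y u * counit C y z v) *: idm C z.
  move=> u v; rewrite -(comp_cmul' (F := fun U V => m (s U) V)); last exact: bil_sm.
  by rewrite hsR comp_counit.
have MG : forall (u : A x y) (v : A y z),
  \sum_(p <- cmul C x y u) \sum_(q <- cmul C y z v) m (m p.1 q.1) (m (s q.2) (s p.2))
  = (counit C x y u * counit C y z v) *: idm C x.
  move=> u v.
  transitivity (\sum_(p <- cmul C x y u) m p.1 (m (\sum_(q <- cmul C y z v) m q.1 (s q.2)) (s p.2))).
    apply: eq_bigr => p _; rewrite comp_suml comp_sumr; apply: eq_bigr => q _.
    by rewrite compA compA.
  rewrite hsL; under eq_bigr do rewrite compZl comp1m compZr.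
  by rewrite -scaler_sumr hsL scalerA mulrC.
have e3 : s (m a b) = \sum_(p <- cmul C x y a) \sum_(q <- cmul C y z b)
    m (s (m p.1 q.1)) (\sum_(p' <- cmul C x y p.2) \sum_(q' <- cmul C y z q.2)
        m (m p'.1 q'.1) (m (s q'.2) (s p'.2))).
  under eq_bigr do under eq_bigr do rewrite MG compZr compm1 -scalerA.
  under [RHS]eq_bigr do rewrite -scaler_sumr.
  rewrite -[LHS](sw_epsR (G := fun w => s (m w b))); last first.
    by move=> c u v; rewrite compDl compZl sD sZ.
  apply: eq_bigr => p _; congr (_ *: _).
  rewrite -[LHS](sw_epsR (G := fun w => s (m p.1 w))) //.
  by move=> c u v; rewrite compDr compZr sD sZ.
have e5 : m (s b) (s a) = \sum_(p <- cmul C x y a) \sum_(q <- cmul C y z b)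
    m (\sum_(p' <- cmul C x y p.1) \sum_(q' <- cmul C y z q.1)
        m (s (m p'.1 q'.1)) (m p'.2 q'.2)) (m (s q.2) (s p.2)).
  under eq_bigr do under eq_bigr do rewrite FM compZl comp1m -scalerA.
  under [RHS]eq_bigr do rewrite -scaler_sumr.
  rewrite -[LHS](sw_epsL (G := fun w => m (s b) (s w))); last first.
    by move=> c u v; rewrite sD sZ compDr compZr.
  apply: eq_bigr => p _; congr (_ *: _).
  rewrite -[LHS](sw_epsL (G := fun w => m (s w) (s p.2))) //.
  by move=> c u v; rewrite sD sZ compDl compZl.
rewrite e3 e5.
transitivity (\sum_(p <- cmul C x y a) \sum_(q <- cmul C y z b)
    \sum_(p' <- cmul C x y p.2) \sum_(q' <- cmul C y z q.2)
    m (s (m p.1 q.1)) (m (m p'.1 q'.1) (m (s q'.2) (s p'.2)))).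
  apply: eq_bigr => p _; apply: eq_bigr => q _.
  rewrite comp_sumr; apply: eq_bigr => p' _; by rewrite comp_sumr.
transitivity (\sum_(p <- cmul C x y a) \sum_(q <- cmul C y z b)
    \sum_(p' <- cmul C x y p.1) \sum_(q' <- cmul C y z q.1)
    m (s (m p'.1 q'.1)) (m (m p'.2 q'.2) (m (s q.2) (s p.2)))); last first.
  apply: eq_bigr => p _; apply: eq_bigr => q _.
  rewrite comp_suml; apply: eq_bigr => p' _; rewrite comp_suml; apply: eq_bigr => q' _.
  by rewrite [RHS]compA.
under eq_bigr do rewrite exchange_big.
under [RHS]eq_bigr do rewrite exchange_big.
pose Phi := fun (u1 u2 u3 : A x y) => \sum_(q <- cmul C y z b) \sum_(q' <- cmul C y z q.2)
    m (s (m u1 q.1)) (m (m u2 q'.1) (m (s q'.2) (s u3))).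
have hPhi : ktrilinear Phi.
  rewrite /Phi; split; [|split] => ? ? c u v; lin_sums; linsimp_P3.
have := coassoc3 hPhi a; rewrite /Phi => <-.
apply: eq_bigr => p _; apply: eq_bigr => p' _.
pose Psi := fun (v1 v2 v3 : A y z) =>
    m (s (m p'.1 v1)) (m (m p'.2 v2) (m (s v3) (s p.2))).
have hPsi : ktrilinear Psi.
  rewrite /Psi; split; [|split] => ? ? c u v; linsimp_P3.
have := coassoc3 hPsi b; rewrite /Psi => <-.
by [].
Qed.

End Hopf.


Section Conv.
Variables (k : comPzRingType) (X : Type) (C : semiHopfCat k X).
Local Notation A := (Ahom C).
Local Notation m := (comp C _ _ _).

Ltac linsimp_P4 := rewrite /= ?(compDl, compZl, compDr, compZr, epsD, epsZ,
  scalerDr, scalerDl, scalerA, mulrDl, mulrDr, mulrA); try done.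

Section RightInv.
Variable s : forall x y, A x y -> A y x.
Hypothesis hs : forall x y, klinear (@s x y).
Hypothesis hsL : forall x y (a : A x y),
  \sum_(p <- cmul C x y a) m p.1 (s p.2) = counit C x y a *: idm C x.

Lemma conv_L_sR x y w (psi : A x y -> A x w) : klinear psi -> forall a : A x y,
  \sum_(p <- cmul C x y a) m p.1 (\sum_(q <- cmul C x y p.2) m (s q.1) (psi q.2)) = psi a.
Proof.
move=> hpsi a.
transitivity (\sum_(p <- cmul C x y a) \sum_(q <- cmul C x y p.2) m p.1 (m (s q.1) (psi q.2))).
  by apply: eq_bigr => p _; rewrite comp_sumr.
pose Phi := fun u1 u2 u3 : A x y => m u1 (m (s u2) (psi u3)).
have hPhi : ktrilinear Phi.
  rewrite /Phi; split; [|split] => ? ? c u v; rewrite /= ?(klinD (@hs _ _), klinZ (@hs _ _), klinD hpsi, klinZ hpsi); linsimp_P4.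
have := coassoc3 hPhi a; rewrite /Phi => <-.
under eq_bigr do under eq_bigr do rewrite -compA.
under eq_bigr do rewrite -comp_suml hsL compZl comp1m.
exact: sw_epsL.
Qed.
End RightInv.

Section LeftInv.
Variable s : forall x y, A x y -> A y x.
Hypothesis hs : forall x y, klinear (@s x y).
Hypothesis hsR : forall x y (a : A x y),
  \sum_(p <- cmul C x y a) m (s p.1) p.2 = counit C x y a *: idm C y.

Lemma conv_sR_L x y w (phi : A x y -> A y w) : klinear phi -> forall a : A x y,
  \sum_(p <- cmul C x y a) m (s p.1) (\sum_(q <- cmul C x y p.2) m q.1 (phi q.2)) = phi a.
Proof.
move=> hphi a.
transitivity (\sum_(p <- cmul C x y a) \sum_(q <- cmul C x y p.2) m (s p.1) (m q.1 (phi q.2))).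
  by apply: eq_bigr => p _; rewrite comp_sumr.
pose Phi := fun u1 u2 u3 : A x y => m (s u1) (m u2 (phi u3)).
have hPhi : ktrilinear Phi.
  rewrite /Phi; split; [|split] => ? ? c u v; rewrite /= ?(klinD (@hs _ _), klinZ (@hs _ _), klinD hphi, klinZ hphi); linsimp_P4.
have := coassoc3 hPhi a; rewrite /Phi => <-.
under eq_bigr do under eq_bigr do rewrite -compA.
under eq_bigr do rewrite -comp_suml hsR compZl comp1m.
exact: sw_epsL.
Qed.
End LeftInv.

Lemma antipode_unique (s s' : forall x y, A x y -> A y x) :
  (forall x y, klinear (@s x y)) -> (forall x y, klinear (@s' x y)) ->
  (forall x y (a : A x y), \sum_(p <- cmul C x y a) m p.1 (s _ _ p.2) = counit C x y a *: idm C x) ->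
  (forall x y (a : A x y), \sum_(p <- cmul C x y a) m (s' _ _ p.1) p.2 = counit C x y a *: idm C y) ->
  forall x y (a : A x y), s' x y a = s x y a.
Proof.
move=> hs hs' hL hR x y a.
have e1 := conv_sR_L hs' hR (hs x y) a.
rewrite -e1.
transitivity (\sum_(p <- cmul C x y a) m (s' _ _ p.1) (counit C x y p.2 *: idm C x)).
  rewrite -[LHS](sw_epsR (G := fun u => s' x y u)) ?hs' //.
  by apply: eq_bigr => p _; rewrite compZr compm1.
by apply: eq_bigr => p _; rewrite hL.
Qed.

End Conv.

Lemma dchoice (T : Type) (U : T -> Type) (P : forall x, U x -> Prop) :
  (forall x, exists u, P x u) -> exists f : forall x, U x, forall x, P x (f x).
Proof.
move=> h; exists (fun x => proj1_sig (constructive_indefinite_description _ (h x))).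
move=> x; exact: (proj2_sig (constructive_indefinite_description _ (h x))).
Qed.

Section BtoF.
Variables (k : comPzRingType) (X : Type) (C : semiHopfCat k X).
Local Notation A := (Ahom C).
Local Notation m := (comp C _ _ _).

Lemma rns_form (t : forall x y, A x y) : right_nonsingular C t ->
  exists lam : forall x, A x x -> k, forall x, kform (lam x) /\
    \sum_(p <- cmul C x x (t x x)) lam x p.2 *: p.1 = idm C x.
Proof.
move=> h; apply: (@dchoice X (fun x => A x x -> k) (fun x l => kform l /\
    \sum_(p <- cmul C x x (t x x)) l p.2 *: p.1 = idm C x)) => x.
have [g [hg [_ hg2]]] := h x.
by exists (g (idm C x)); split.
Qed.

Lemma lns_form (t : forall x y, A x y) : left_nonsingular C t ->
  exists lam : forall x, A x x -> k, forall x, kform (lam x) /\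
    \sum_(p <- cmul C x x (t x x)) lam x p.1 *: p.2 = idm C x.
Proof.
move=> h; apply: (@dchoice X (fun x => A x x -> k) (fun x l => kform l /\
    \sum_(p <- cmul C x x (t x x)) l p.1 *: p.2 = idm C x)) => x.
have [g [hg [_ hg2]]] := h x.
by exists (g (idm C x)); split.
Qed.

Lemma right_inv_from_integral (t : forall x y, A x y) : left_integral C t ->
  right_nonsingular C t ->
  exists s : forall x y, A x y -> A y x, (forall x y, klinear (s x y)) /\
    forall x y (a : A x y), \sum_(p <- cmul C x y a) m p.1 (s x y p.2) = counit C x y a *: idm C x.
Proof.
move=> ht hns; have [lam hlam] := rns_form hns.
exists (fun x y a => \sum_(p <- cmul C y x (t y x)) lam x (m a p.2) *: p.1); split.
  move=> x y c u v /=; rewrite scaler_sumr -big_split; apply: eq_bigr => p _ /=.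
  have hl := (hlam x).1.
  by rewrite compDl compZl (kformD hl) (kformZ hl) scalerDl scalerA.
move=> x y a /=; have hl := (hlam x).1.
transitivity (\sum_(p <- cmul C x y a) \sum_(q <- cmul C y x (t y x))
   lam x (m p.2 q.2) *: m p.1 q.1).
  apply: eq_bigr => p _; rewrite comp_sumr; apply: eq_bigr => q _; by rewrite compZr.
have hF : kbilinear (fun U V : A x x => lam x V *: U).
  split=> [V|U] c u v /=; first by rewrite scalerDr scalerA mulrC -scalerA.
  by rewrite (kformD hl) (kformZ hl) scalerDl scalerA.
rewrite -(comp_cmul' (F := fun U V => lam x V *: U)) //.
by rewrite ht (swZ (F := fun U V => lam x V *: U)) // (hlam x).2.
Qed.

Lemma left_inv_from_integral (t : forall x y, A x y) : right_integral C t ->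
  left_nonsingular C t ->
  exists s : forall x y, A x y -> A y x, (forall x y, klinear (s x y)) /\
    forall x y (a : A x y), \sum_(p <- cmul C x y a) m (s x y p.1) p.2 = counit C x y a *: idm C y.
Proof.
move=> ht hns; have [lam hlam] := lns_form hns.
exists (fun x y a => \sum_(p <- cmul C y x (t y x)) lam y (m p.1 a) *: p.2); split.
  move=> x y c u v /=; rewrite scaler_sumr -big_split; apply: eq_bigr => p _ /=.
  have hl := (hlam y).1.
  by rewrite compDr compZr (kformD hl) (kformZ hl) scalerDl scalerA.
move=> x y a /=; have hl := (hlam y).1.
transitivity (\sum_(q <- cmul C y x (t y x)) \sum_(p <- cmul C x y a)
   lam y (m q.1 p.1) *: m q.2 p.2).
  rewrite exchange_big; apply: eq_bigr => p _; rewrite comp_suml; apply: eq_bigr => q _.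
  by rewrite compZl.
have hF : kbilinear (fun U V : A y y => lam y U *: V).
  split=> [V|U] c u v /=; last by rewrite scalerDr scalerA mulrC -scalerA.
  by rewrite (kformD hl) (kformZ hl) scalerDl scalerA.
rewrite -(comp_cmul' (F := fun U V => lam y U *: V)) //.
by rewrite ht (swZ (F := fun U V => lam y U *: V)) // (hlam y).2.
Qed.

Lemma b_to_Hopf : (exists t, right_integral C t /\ left_nonsingular C t) ->
  (exists t, left_integral C t /\ right_nonsingular C t) -> is_Hopf C.
Proof.
move=> [t [ht hnt]] [t' [ht' hnt']].
have [s [hs hsL]] := right_inv_from_integral ht' hnt'.
have [s' [hs' hsR]] := left_inv_from_integral ht hnt.
exists s; split=> //; split=> // x y a.
rewrite -(hsR x y a); apply: eq_bigr => p _.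
by rewrite (antipode_unique hs hs' hsL hsR).
Qed.

End BtoF.

Lemma has_rank_mx (k : comPzRingType) a b : has_rank ('M[k]_(a, b)) (a * b).
Proof.
exists (@vec_mx k a b); split; first by move=> c u v; rewrite linearP.
by exists mxvec; [exact: vec_mxK | exact: mxvecK].
Qed.

Section Mat.
Variables (k : comPzRingType) (X : Type) (C : semiHopfCat k X).
Local Notation A := (Ahom C).
Local Notation m := (comp C _ _ _).
Variables (x y : X) (r n : nat).
Variables (f1 : 'rV[k]_r -> A x y) (g1 : A x y -> 'rV[k]_r).
Variables (f2 : 'rV[k]_n -> A y y) (g2 : A y y -> 'rV[k]_n).
Hypotheses (hf1 : klinear f1) (hf2 : klinear f2).
Hypotheses (f1K : cancel f1 g1) (g1K : cancel g1 f1) (f2K : cancel f2 g2) (g2K : cancel g2 f2).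
Let hg1 := klinear_inv hf1 f1K g1K.
Let hg2 := klinear_inv hf2 f2K g2K.

Definition phiM (P : 'M[k]_(r, n)) (a : A x y) : A y y := f2 (g1 a *m P).
Definition psiM (P : 'M[k]_(r, r)) (a : A x y) : A x y := f1 (g1 a *m P).

Lemma klin_mulmx a b (P : 'M[k]_(a, b)) : klinear (fun v : 'rV[k]_a => v *m P).
Proof. by move=> c u v; rewrite mulmxDl scalemxAl. Qed.

Lemma klin_phiM P : klinear (phiM P).
Proof. rewrite /phiM; apply: klinear_comp hf2; apply: klinear_comp hg1 (klin_mulmx _). Qed.
Lemma klin_psiM P : klinear (psiM P).
Proof. rewrite /psiM; apply: klinear_comp hf1; apply: klinear_comp hg1 (klin_mulmx _). Qed.

Lemma phiM_lin c P Q a : phiM (c *: P + Q) a = c *: phiM P a + phiM Q a.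
Proof. by rewrite /phiM mulmxDr -scalemxAr hf2. Qed.
Lemma psiM_lin c P Q a : psiM (c *: P + Q) a = c *: psiM P a + psiM Q a.
Proof. by rewrite /psiM mulmxDr -scalemxAr hf1. Qed.

Lemma phiM_ext P Q : (forall a, phiM P a = phiM Q a) -> P = Q.
Proof.
move=> e; apply/row_matrixP => i; rewrite !rowE.
have := e (f1 (delta_mx 0 i)); rewrite /phiM f1K.
by move/(can_inj f2K).
Qed.
Lemma psiM_ext P Q : (forall a, psiM P a = psiM Q a) -> P = Q.
Proof.
move=> e; apply/row_matrixP => i; rewrite !rowE.
have := e (f1 (delta_mx 0 i)); rewrite /psiM f1K.
by move/(can_inj f1K).
Qed.

Lemma mx_of_phi (phi : A x y -> A y y) : klinear phi ->
  exists P, forall a, phiM P a = phi a.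
Proof.
move=> hphi; exists (lin1_mx (fun v => g2 (phi (f1 v)))) => a.
rewrite /phiM mul_rV_klin1 ?g1K ?g2K //.
apply: klinear_comp hg2; exact: klinear_comp hf1 hphi.
Qed.
Lemma mx_of_psi (psi : A x y -> A x y) : klinear psi ->
  exists P, forall a, psiM P a = psi a.
Proof.
move=> hpsi; exists (lin1_mx (fun v => g1 (psi (f1 v)))) => a.
rewrite /psiM mul_rV_klin1 ?g1K //.
apply: klinear_comp hg1; exact: klinear_comp hf1 hpsi.
Qed.

Lemma bil_m_phi P : kbilinear (fun u v : A x y => m u (phiM P v)).
Proof.
split=> [v|u] c a b /=; first by rewrite compDl compZl.
by rewrite (klinD (klin_phiM P)) (klinZ (klin_phiM P)) compDr compZr.
Qed.

Definition Lm (P : 'M[k]_(r, n)) : 'M[k]_(r, r) :=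
  lin1_mx (fun v => g1 (\sum_(p <- cmul C x y (f1 v)) m p.1 (phiM P p.2))).

Lemma psiM_Lm P a : psiM (Lm P) a = \sum_(p <- cmul C x y a) m p.1 (phiM P p.2).
Proof.
rewrite /psiM /Lm mul_rV_klin1 ?g1K ?g1K //.
apply: klinear_comp hg1; apply: klinear_comp hf1 (sw_lin (bil_m_phi P)).
Qed.

Lemma Lm_lin : klinear Lm.
Proof.
move=> c P Q; apply: psiM_ext => a; rewrite psiM_lin !psiM_Lm scaler_sumr -big_split.
by apply: eq_bigr => p _; rewrite phiM_lin compDr compZr.
Qed.

Section WithS.
Variable s : forall x y, A x y -> A y x.
Hypothesis hs : forall x y, klinear (@s x y).

Lemma bil_s_psi P : kbilinear (fun u v : A x y => m (s u) (psiM P v)).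
Proof.
split=> [v|u] c a b /=; first by rewrite (klinD (@hs _ _)) (klinZ (@hs _ _)) compDl compZl.
by rewrite (klinD (klin_psiM P)) (klinZ (klin_psiM P)) compDr compZr.
Qed.

Definition Rm (P : 'M[k]_(r, r)) : 'M[k]_(r, n) :=
  lin1_mx (fun v => g2 (\sum_(p <- cmul C x y (f1 v)) m (s p.1) (psiM P p.2))).

Lemma phiM_Rm P a : phiM (Rm P) a = \sum_(p <- cmul C x y a) m (s p.1) (psiM P p.2).
Proof.
rewrite /phiM /Rm mul_rV_klin1 ?g1K ?g2K //.
apply: klinear_comp hg2; apply: klinear_comp hf1 (sw_lin (bil_s_psi P)).
Qed.

Lemma Rm_lin : klinear Rm.
Proof.
move=> c P Q; apply: phiM_ext => a; rewrite phiM_lin !phiM_Rm scaler_sumr -big_split.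
by apply: eq_bigr => p _; rewrite psiM_lin compDr compZr.
Qed.

Lemma LmRm (hsL : forall x y (a : A x y),
  \sum_(p <- cmul C x y a) m p.1 (s p.2) = counit C x y a *: idm C x) P :
  Lm (Rm P) = P.
Proof.
apply: psiM_ext => a; rewrite psiM_Lm.
under eq_bigr do rewrite phiM_Rm.
exact: (conv_L_sR hs hsL (klin_psiM P)).
Qed.

Lemma RmLm (hsR : forall x y (a : A x y),
  \sum_(p <- cmul C x y a) m (s p.1) p.2 = counit C x y a *: idm C y) P :
  Rm (Lm P) = P.
Proof.
apply: phiM_ext => a; rewrite phiM_Rm.
under eq_bigr do rewrite psiM_Lm.
exact: (conv_sR_L hs hsR (klin_phiM P)).
Qed.

Lemma leftinv_of_rank (hsL : forall x y (a : A x y),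
  \sum_(p <- cmul C x y a) m p.1 (s p.2) = counit C x y a *: idm C x) (rn : r = n) a :
  \sum_(p <- cmul C x y a) m (s p.1) p.2 = counit C x y a *: idm C y.
Proof.
have e : (r * r)%N = (r * n)%N by rewrite rn.
have h1 : has_rank 'M[k]_(r, r) (r * n) by rewrite -e; exact: has_rank_mx.
have RL := rank_surj_inj (has_rank_mx k r n) h1 Lm_lin Rm_lin (LmRm hsL).
have heps : klinear (fun b : A x y => counit C x y b *: idm C y).
  by move=> c u v; rewrite epsD epsZ scalerDl scalerA.
have [eta heta] := mx_of_phi heps.
have L1 : Lm eta = 1%:M.
  apply: psiM_ext => b; rewrite psiM_Lm /psiM mulmx1 g1K.
  under eq_bigr do rewrite heta compZr compm1.
  exact: counitR.
have := RL eta; rewrite L1 => e2.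
rewrite -heta -e2 phiM_Rm; apply: eq_bigr => p _; by rewrite /psiM mulmx1 g1K.
Qed.

Lemma hopf_rank_eq (hsL : forall x y (a : A x y),
  \sum_(p <- cmul C x y a) m p.1 (s p.2) = counit C x y a *: idm C x)
  (hsR : forall x y (a : A x y),
  \sum_(p <- cmul C x y a) m (s p.1) p.2 = counit C x y a *: idm C y)
  (nz : (1 : k) != 0) : (r * n = r * r)%N.
Proof.
exact: (has_rank_iso_eq (has_rank_mx k r n) (has_rank_mx k r r) Lm_lin Rm_lin
  (RmLm hsR) (LmRm hsL) nz).
Qed.

End WithS.
End Mat.

Section EtoF.
Variables (k : comPzRingType) (X : Type) (C : semiHopfCat k X).
Local Notation A := (Ahom C).
Local Notation m := (comp C _ _ _).

Lemma e_to_Hopf : (exists t, left_integral C t /\ right_nonsingular C t) ->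
  same_rank_cond C -> is_Hopf C.
Proof.
move=> [t [ht hnt]] hsr.
have [s [hs hsL]] := right_inv_from_integral ht hnt.
exists s; split=> //; split=> // x y a.
case: (eqVneq a 0) => [->|nz].
  rewrite eps0 scale0r (sw0 (F := fun u v => m (s _ _ u) v)) //.
  split=> [v|u] c a1 b1 /=; first by rewrite (klinD (hs _ _)) (klinZ (hs _ _)) compDl compZl.
  by rewrite compDr compZr.
have [n [[f1 [hf1 [g1 f1K g1K]]] [f2 [hf2 [g2 f2K g2K]]]]] := hsr x y (ex_intro _ a nz).
exact: (leftinv_of_rank hf1 hf2 f1K g1K f2K g2K hs hsL erefl).
Qed.

Lemma Hopf_same_rank (hk : forall M : lmodType k, fg_projective M -> free_fin M)
  (hfg : forall x y, fg_projective (A x y)) : is_Hopf C -> same_rank_cond C.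
Proof.
move=> [s [hs [hsL hsR]]] x y [a nz].
have [r [f1 [hf1 [g1 f1K g1K]]]] := hk _ (hfg x y).
have [n [f2 [hf2 [g2 f2K g2K]]]] := hk _ (hfg y y).
have nz1 : (1 : k) != 0.
  by apply/eqP => e; move: nz; rewrite (triv_eq0 e a) eqxx.
have rpos : (0 < r)%N.
  case: r f1 hf1 g1 f1K g1K => // f1 hf1 g1 f1K g1K.
  move: nz; rewrite -(g1K a) (thinmx0 (g1 a)) (klin0 hf1) eqxx //.
have e := hopf_rank_eq hf1 hf2 f1K g1K f2K g2K hs hsL hsR nz1.
have nr : n = r by apply/eqP; rewrite -(eqn_pmul2l rpos) e.
subst n; exists r; split; [exists f1 | exists f2]; split=> //; [exists g1 | exists g2] => //.
Qed.

End EtoF.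

Ltac modring := rewrite ?mulrDl ?mulrDr ?scalerDr ?scalerDl; rewrite ?scalerA;
  congr (_ + _); try (congr (_ *: _); ring).

Section Basis.
Variables (k : comPzRingType) (M : lmodType k) (n : nat).
Variables (f : 'rV[k]_n -> M) (g : M -> 'rV[k]_n).
Hypotheses (hf : klinear f) (fK : cancel f g) (gK : cancel g f).
Let hg := klinear_inv hf fK gK.

Definition eb (i : 'I_n) : M := f (delta_mx 0 i).
Definition ed (i : 'I_n) (u : M) : k := g u 0 i.

Lemma ed_form i : kform (ed i).
Proof. by move=> c u v; rewrite /ed hg !mxE. Qed.

Lemma expand (u : M) : u = \sum_i ed i u *: eb i.
Proof.
rewrite -{1}(gK u) [g u]row_sum_delta (klin_sum hf); apply: eq_bigr => i _.
by rewrite klinZ.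
Qed.

Lemma expand_form (phi : M -> k) : kform phi -> forall u, phi u = \sum_i ed i u * phi (eb i).
Proof.
move=> hphi u; rewrite {1}(expand u) (kform_sum hphi); apply: eq_bigr => i _.
by rewrite kformZ.
Qed.


Lemma dual_move (V : lmodType k) (G : (M -> k) -> M -> V) (L : M -> M) :
  klinear L -> (forall i, klinear (G (ed i))) ->
  (forall (c : 'I_n -> k) v, G (fun u => \sum_i c i * ed i u) v = \sum_i c i *: G (ed i) v) ->
  \sum_i G (ed i) (L (eb i)) = \sum_i G (fun u => ed i (L u)) (eb i).
Proof.
move=> hL hG hc.
transitivity (\sum_i \sum_j ed j (L (eb i)) *: G (ed i) (eb j)).
  apply: eq_bigr => i _; rewrite {1}(expand (L (eb i))) (klin_sum (hG _)).
  by apply: eq_bigr => j _; rewrite klinZ.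
rewrite exchange_big; apply: eq_bigr => j _; rewrite -hc.
congr (G _ _); apply: functional_extensionality => u.
rewrite [in RHS](expand u) (klin_sum hL) (kform_sum (ed_form j)).
by apply: eq_bigr => i _; rewrite klinZ // (kformZ (ed_form j)) mulrC.
Qed.

Lemma dual_move2 (V : lmodType k) (G : (M -> M -> k) -> M -> V) (mu : M -> M -> M) :
  kbilinear mu -> (forall j i, klinear (G (fun a b => ed j a * ed i b))) ->
  (forall (c : 'I_n -> 'I_n -> k) v,
     G (fun a b => \sum_j \sum_i c j i * (ed j a * ed i b)) v =
     \sum_j \sum_i c j i *: G (fun a b => ed j a * ed i b) v) ->
  \sum_j \sum_i G (fun a b => ed j a * ed i b) (mu (eb j) (eb i)) =
  \sum_l G (fun a b => ed l (mu a b)) (eb l).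
Proof.
move=> [hmu1 hmu2] hG hc.
transitivity (\sum_j \sum_i \sum_l ed l (mu (eb j) (eb i)) *: G (fun a b => ed j a * ed i b) (eb l)).
  apply: eq_bigr => j _; apply: eq_bigr => i _.
  rewrite {1}(expand (mu (eb j) (eb i))) (klin_sum (hG _ _)).
  by apply: eq_bigr => l _; rewrite klinZ.
transitivity (\sum_l \sum_j \sum_i ed l (mu (eb j) (eb i)) *: G (fun a b => ed j a * ed i b) (eb l)).
  under eq_bigr do rewrite exchange_big.
  by rewrite exchange_big.
apply: eq_bigr => l _; rewrite -hc.
congr (G _ _); apply: functional_extensionality => a; apply: functional_extensionality => b.
rewrite [in RHS](expand a) (klin_sum (hmu1 _)) (kform_sum (ed_form l)).
apply: eq_bigr => j _; rewrite (klinZ (hmu1 _)) (kformZ (ed_form l)).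
rewrite [in RHS](expand b) (klin_sum (hmu2 _)) (kform_sum (ed_form l)) mulr_sumr.
apply: eq_bigr => i _; rewrite (klinZ (hmu2 _)) (kformZ (ed_form l)).
ring.
Qed.

End Basis.

Lemma exch4 (V : nmodType) (I J K L : Type) (r1 : seq I) (r2 : I -> seq J) (r3 : seq K) (r4 : seq L)
  (F : I -> J -> K -> L -> V) :
  \sum_(a <- r1) \sum_(b <- r2 a) \sum_(c <- r3) \sum_(d <- r4) F a b c d =
  \sum_(c <- r3) \sum_(d <- r4) \sum_(a <- r1) \sum_(b <- r2 a) F a b c d.
Proof.
under eq_bigr do rewrite exchange_big.
under eq_bigr do under eq_bigr do rewrite exchange_big.
rewrite exchange_big; apply: eq_bigr => c _.
by rewrite exchange_big.
Qed.

Section Act.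
Variables (k : comPzRingType) (X : Type) (C : semiHopfCat k X).
Local Notation A := (Ahom C).
Local Notation m := (comp C _ _ _).
Variable s : forall x y, A x y -> A y x.
Hypothesis hs : forall x y, klinear (@s x y).
Hypothesis hsL : forall x y (a : A x y),
  \sum_(p <- cmul C x y a) m p.1 (s p.2) = counit C x y a *: idm C x.
Hypothesis hsR : forall x y (a : A x y),
  \sum_(p <- cmul C x y a) m (s p.1) p.2 = counit C x y a *: idm C y.
Variable y : X.
Local Notation H := (A y y).

Let sA := s_anti hs hsL hsR.
Let sDD := sD hs.
Let sZZ := sZ hs.

Ltac linsimp_P8 := rewrite /= ?(compDl, compZl, compDr, compZr, sDD, sZZ, epsD, epsZ,
  scalerDr, scalerDl, scalerA, mulrDl, mulrDr, mulrA); try done.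

Definition act (w : H) (phi : H -> k) : H :=
  \sum_(p <- cmul C y y w) phi (s p.2) *: p.1.

Lemma bil_act (phi : H -> k) : kform phi -> kbilinear (fun u v : H => phi (s v) *: u).
Proof.
move=> hphi; split=> [v|u] c a b /=; first by rewrite scalerDr scalerA mulrC -scalerA.
by rewrite sDD sZZ (kformD hphi) (kformZ hphi) scalerDl scalerA.
Qed.

Lemma act_lin (phi : H -> k) : kform phi -> klinear (fun w => act w phi).
Proof. move=> hphi; exact: (sw_lin (bil_act hphi)). Qed.

Lemma act_formsum I (r : seq I) (c : I -> k) (phi : I -> H -> k) w :
  act w (fun u => \sum_(i <- r) c i * phi i u) = \sum_(i <- r) c i *: act w (phi i).
Proof.
rewrite /act; under eq_bigr do rewrite scaler_suml.
rewrite exchange_big; apply: eq_bigr => i _; rewrite scaler_sumr.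
by apply: eq_bigr => p _; rewrite scalerA.
Qed.

Lemma act_ext w (phi psi : H -> k) : (forall u, phi u = psi u) -> act w phi = act w psi.
Proof. by move=> e; apply: eq_bigr => p _; rewrite e. Qed.

Lemma act_act w (g f : H -> k) : kform g -> kform f ->
  act (act w g) f = \sum_(q <- cmul C y y w) \sum_(p <- cmul C y y q.2)
     (g (s p.2) * f (s p.1)) *: q.1.
Proof.
move=> hg hf; rewrite /act (klin_sum (sw_lin (bil_act hf))).
under eq_bigr do rewrite (klinZ (sw_lin (bil_act hf))) /= scaler_sumr.
under eq_bigr do under eq_bigr do rewrite scalerA.
pose F := fun u1 u2 u3 : H => (g (s u3) * f (s u2)) *: u1.
have hF : ktrilinear F.
  rewrite /F; split; [|split] => ? ? c u v /=.
  - by modring.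
  - by rewrite sDD sZZ (kformD hf) (kformZ hf); modring.
  - by rewrite sDD sZZ (kformD hg) (kformZ hg); modring.
have := coassoc3 hF w; rewrite /F => ->.
done.
Qed.

Lemma act_CP (f : H -> k) : kform f -> forall (a w : H),
  m a (act w f) = \sum_(q <- cmul C y y a) act (m q.1 w) (fun u => f (m u q.2)).
Proof.
move=> hf a w; symmetry.
transitivity (\sum_(q <- cmul C y y a) \sum_(q' <- cmul C y y q.1) \sum_(p <- cmul C y y w)
   f (m (s (m q'.2 p.2)) q.2) *: m q'.1 p.1).
  apply: eq_bigr => q _; rewrite /act.
  rewrite (comp_cmul' (F := fun U V => f (m (s V) q.2) *: U)) //.
  split=> [V|U] c u v /=; first by rewrite scalerDr scalerA mulrC -scalerA.
  by rewrite sDD sZZ compDl compZl (kformD hf) (kformZ hf) scalerDl scalerA.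
pose F := fun u1 u2 u3 : H => \sum_(p <- cmul C y y w) f (m (s (m u2 p.2)) u3) *: m u1 p.1.
have hF : ktrilinear F.
  rewrite /F; split; [|split] => ? ? c u v; lin_sums.
  - by rewrite compDl compZl scalerDr scalerA mulrC -scalerA.
  - by rewrite compDl compZl sDD sZZ compDl compZl (kformD hf) (kformZ hf) scalerDl scalerA.
  - by rewrite compDr compZr (kformD hf) (kformZ hf) scalerDl scalerA.
have := coassoc3 hF a; rewrite /F => ->.
transitivity (\sum_(q <- cmul C y y a) \sum_(p <- cmul C y y w)
   f (m (s p.2) (\sum_(q' <- cmul C y y q.2) m (s q'.1) q'.2)) *: m q.1 p.1).
  apply: eq_bigr => q _; rewrite exchange_big; apply: eq_bigr => p _.
  rewrite comp_sumr (kform_sum hf) scaler_suml; apply: eq_bigr => q' _.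
  by rewrite sA compA.
under eq_bigr do under eq_bigr do rewrite hsR compZr compm1 (kformZ hf) -scalerA.
under eq_bigr do rewrite -scaler_sumr.
rewrite -[in RHS](sw_epsR (G := fun u => m u (act w f))); last by move=> c u v; rewrite compDl compZl.
apply: eq_bigr => q _; congr (_ *: _); rewrite /act comp_sumr; apply: eq_bigr => p _.
by rewrite compZr.
Qed.


Lemma act_sumform I (r : seq I) (phi : I -> H -> k) w :
  act w (fun u => \sum_(i <- r) phi i u) = \sum_(i <- r) act w (phi i).
Proof.
rewrite /act; under eq_bigr do rewrite scaler_suml.
by rewrite exchange_big.
Qed.

Lemma act_scalform (c : k) (phi : H -> k) w :
  act w (fun u => c * phi u) = c *: act w phi.
Proof.
rewrite /act scaler_sumr; by apply: eq_bigr => p _; rewrite scalerA.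
Qed.

Definition is_int (t : H) := forall a : H, m a t = counit C y y a *: t.

Lemma mul_act t (f : H -> k) : is_int t -> kform f -> forall h,
  m h (act t f) = act t (fun u => f (m u h)).
Proof.
move=> ht hf h; rewrite (act_CP hf).
have hfq : forall q : H, kform (fun u => f (m u q)).
  by move=> q c u v; rewrite compDl compZl (kformD hf) (kformZ hf).
under eq_bigr do rewrite ht (klinZ (act_lin (hfq _))).
rewrite -act_formsum; apply: act_ext => u.
apply: (sw_epsL_form (G := fun v => f (m u v))).
by move=> c a b; rewrite compDr compZr (kformD hf) (kformZ hf).
Qed.

Variables (n : nat) (f : 'rV[k]_n -> H) (g : H -> 'rV[k]_n).
Hypotheses (hf : klinear f) (fK : cancel f g) (gK : cancel g f).
Local Notation e i := (eb f i).
Local Notation e' i := (ed g i).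
Let hed i : kform (e' i) := ed_form hf fK gK i.
Let expd := expand hf gK.
Let expdf := expand_form hf gK.

Lemma hed_s i : kform (fun u => e' i (s u)).
Proof. by move=> c u v; rewrite sDD sZZ (kformD (hed i)) (kformZ (hed i)). Qed.

Definition Pr (h : H) : H := \sum_i act (m (e i) h) (fun u => e' i (s u)).

Lemma Pr_lin : klinear Pr.
Proof.
move=> c u v; rewrite /Pr scaler_sumr -big_split; apply: eq_bigr => i _ /=.
by rewrite compDr compZr (act_lin (hed_s i)).
Qed.

Lemma Pr_int h : is_int (Pr h).
Proof.
move=> a; rewrite /Pr comp_sumr.
under eq_bigr do rewrite (act_CP (hed_s _)).
rewrite exchange_big /=.
transitivity (\sum_(q <- cmul C y y a) \sum_i
   act (m (e i) h) (fun u => e' i (m q.1 (m (s q.2) (s u))))).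
  apply: eq_bigr => q _.
  transitivity (\sum_i act (m (m q.1 (e i)) h) (fun u => e' i (m (s q.2) (s u)))).
    by apply: eq_bigr => i _; rewrite compA; apply: act_ext => u; rewrite sA.
  apply: (dual_move hf fK gK (G := fun phi v => act (m v h) (fun u => phi (m (s q.2) (s u))))
     (L := fun v => m q.1 v)).
  - by move=> c u v; rewrite compDr compZr.
  - move=> i c u v /=; rewrite compDl compZl.
    apply: (act_lin (phi := fun u => e' i (m (s q.2) (s u)))).
    by move=> c' u' v'; rewrite sDD sZZ compDr compZr (kformD (hed i)) (kformZ (hed i)).
  - by move=> c v /=; rewrite act_formsum.
rewrite exchange_big /= scaler_sumr; apply: eq_bigr => i _.
rewrite -act_sumform -act_scalform; apply: act_ext => u.
rewrite -(kform_sum (hed i)).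
under eq_bigr do rewrite -compA.
by rewrite -comp_suml hsL compZl comp1m (kformZ (hed i)).
Qed.

Lemma Pr_id t : is_int t -> Pr t = t.
Proof.
move=> ht; rewrite /Pr; under eq_bigr do rewrite ht (klinZ (act_lin (hed_s _))).
rewrite -act_formsum.
transitivity (act t (fun u => counit C y y (s u))).
  apply: act_ext => u; rewrite (expdf (counit_lin _ _ C y y)); apply: eq_bigr => i _; by rewrite mulrC.
rewrite /act; under eq_bigr do rewrite !(eps_s hs hsL).
exact: counitR.
Qed.

Lemma Pr_act_aux t (g0 : H -> k) : is_int t -> kform g0 -> Pr (act t g0) = g0 (idm C y) *: t.
Proof.
move=> ht hg0; rewrite /Pr.
have hg1 : forall i, kform (fun u => g0 (m u (e i))).
  by move=> i c u v; rewrite compDl compZl (kformD hg0) (kformZ hg0).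
under eq_bigr do rewrite (mul_act ht hg0) (act_act _ (hg1 _) (hed_s _)).
rewrite exchange_big; under eq_bigr do rewrite exchange_big.
under eq_bigr do under eq_bigr do rewrite -scaler_suml.
transitivity (\sum_(q <- cmul C y y t) (counit C y y q.2 * g0 (idm C y)) *: q.1).
  apply: eq_bigr => q _.
  transitivity (\sum_(p <- cmul C y y q.2) g0 (s (m (s p.1) p.2)) *: q.1).
    apply: eq_bigr => p _; congr (_ *: _).
    have hg2 : kform (fun v => g0 (m (s p.2) v)).
      by move=> c u v; rewrite compDr compZr (kformD hg0) (kformZ hg0).
    rewrite sA (expdf hg2); apply: eq_bigr => i _; by rewrite mulrC.
  rewrite -scaler_suml -(kform_sum hg0) -(klin_sum (@hs _ _)) hsR sZZ (s1 hs hsR).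
  by rewrite (kformZ hg0).
under eq_bigr do rewrite mulrC -scalerA.
by rewrite -scaler_sumr (counitR _ _ C).
Qed.

Lemma Pr_act t (f0 : H -> k) : is_int t -> kform f0 -> forall h,
  Pr (m h (act t f0)) = f0 h *: t.
Proof.
move=> ht hf0 h; rewrite (mul_act ht hf0) Pr_act_aux ?comp1m //.
by move=> c u v; rewrite compDl compZl (kformD hf0) (kformZ hf0).
Qed.

Definition G2 (h : H) (be : H -> H -> k) (v : H) : H :=
  \sum_(q <- cmul C y y (m v h)) \sum_(p <- cmul C y y q.2) be (s (s p.2)) (s p.1) *: q.1.

Lemma G2_lin h (be : H -> H -> k) : (forall b, kform (be ^~ b)) -> (forall a, kform (be a)) ->
  klinear (G2 h be).
Proof.
move=> hb1 hb2.
have hF2 : forall U : H, kbilinear (fun a b : H => be (s (s b)) (s a) *: U).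
  move=> U; split=> [b|a] c u v /=.
    by rewrite sDD sZZ (kformD (hb2 _)) (kformZ (hb2 _)) scalerDl scalerA.
  by rewrite !sDD !sZZ (kformD (hb1 _)) (kformZ (hb1 _)) scalerDl scalerA.
have hF : kbilinear (fun U V : H => \sum_(p <- cmul C y y V) be (s (s p.2)) (s p.1) *: U).
  split=> [V|U] c u v /=.
    rewrite scaler_sumr -big_split; apply: eq_bigr => p _ /=; by modring.
  exact: (sw_lin (hF2 U)).
move=> c u v; rewrite /G2 compDl compZl.
exact: (sw_lin hF).
Qed.

Lemma recon h : \sum_i act (Pr (m (e i) h)) (e' i) = h.
Proof.
transitivity (\sum_i \sum_j G2 h (fun a b => e' j a * e' i b) (m (e j) (e i))).
  apply: eq_bigr => i _; rewrite /Pr (klin_sum (act_lin (hed i))).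
  apply: eq_bigr => j _; rewrite (act_act _ (hed_s j) (hed i)) /G2 compA.
  by [].
rewrite exchange_big /=.
rewrite (dual_move2 hf fK gK (G := G2 h) (mu := comp C y y y)).
- transitivity (\sum_l e' l (idm C y) *: m (e l) h); last first.
    under eq_bigr do rewrite -compZl.
    by rewrite -comp_suml -expd comp1m.
  apply: eq_bigr => l _; rewrite /G2.
  transitivity (\sum_(q <- cmul C y y (m (e l) h)) (counit C y y q.2 * e' l (idm C y)) *: q.1).
    apply: eq_bigr => q _.
    transitivity (e' l (s (\sum_(p <- cmul C y y q.2) m p.1 (s p.2))) *: q.1).
      rewrite (klin_sum (@hs _ _)) (kform_sum (hed l)) scaler_suml.
      by apply: eq_bigr => p _; rewrite sA.
    by rewrite hsL sZZ (s1 hs hsR) (kformZ (hed l)).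
  under eq_bigr do rewrite mulrC -scalerA.
  by rewrite -scaler_sumr (counitR _ _ C).
- exact: comp_bilin.
- move=> j i; apply: G2_lin => [b|a] c u v /=.
    by rewrite (kformD (hed j)) (kformZ (hed j)); ring.
  by rewrite (kformD (hed i)) (kformZ (hed i)); ring.
- move=> c v; rewrite /G2.
  transitivity (\sum_(q <- cmul C y y (m v h)) \sum_(p <- cmul C y y q.2) \sum_j \sum_i
     (c j i * (e' j (s (s p.2)) * e' i (s p.1))) *: q.1).
    apply: eq_bigr => q _; apply: eq_bigr => p _.
    rewrite scaler_suml; apply: eq_bigr => j _; by rewrite scaler_suml.
  rewrite exch4; apply: eq_bigr => j _; apply: eq_bigr => i _.
  rewrite scaler_sumr; apply: eq_bigr => q _; rewrite scaler_sumr; apply: eq_bigr => p _.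
  by rewrite scalerA.
Qed.

End Act.

Section Img.
Variables (k : comPzRingType) (M : lmodType k) (E : M -> M).
Hypothesis hE : klinear E.
Definition Epred := [pred v : M | E v == v].
Lemma Epred_closed : subsemimod_closed Epred.
Proof.
split; first split.
- by rewrite inE (klin0 hE).
- by move=> u v; rewrite !inE (klinD hE) => /eqP -> /eqP ->.
- by move=> c u; rewrite !inE (klinZ hE) => /eqP ->.
Qed.
HB.instance Definition _ := GRing.isSubmodClosed.Build k M Epred Epred_closed.
Record img := Img { img_val :> M; _ : img_val \in Epred }.
HB.instance Definition _ := [isSub for img_val].
HB.instance Definition _ := [Choice of img by <:].
HB.instance Definition _ := [SubChoice_isSubLmodule of img by <:].

Lemma img_valD (u v : img) : img_val (u + v) = img_val u + img_val v.
Proof. by []. Qed.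
Lemma img_valZ c (u : img) : img_val (c *: u) = c *: img_val u.
Proof. by []. Qed.
Lemma img_val0 : img_val (0 : img) = 0.
Proof. by []. Qed.
Lemma klin_img_val : klinear (img_val : img -> M).
Proof. by []. Qed.
Lemma img_val_inj : injective img_val.
Proof. exact: val_inj. Qed.
Lemma img_fix (u : img) : E u = u.
Proof. by case: u => v /= /eqP. Qed.

Hypothesis hEE : forall v, E (E v) = E v.
Lemma Epred_E v : E v \in Epred.
Proof. by rewrite inE hEE. Qed.
Definition iP (v : M) : img := Img (Epred_E v).
Lemma iP_val v : img_val (iP v) = E v.
Proof. by []. Qed.
Lemma klin_iP : klinear iP.
Proof. by move=> c u v; apply: img_val_inj; rewrite iP_val img_valD img_valZ !iP_val hE. Qed.

Lemma img_fgp : fg_projective M -> fg_projective img.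
Proof.
move=> [n [i [p [hi [hp pi]]]]].
exists n, (fun u => i (img_val u)), (fun w => iP (p w)); split; last split.
- by apply: klinear_comp => //; exact: klin_img_val.
- by apply: klinear_comp => //; exact: klin_iP.
- by move=> u; apply: img_val_inj; rewrite iP_val pi img_fix.
Qed.
End Img.

Lemma ed_eb (k : comPzRingType) (M : lmodType k) n (f : 'rV[k]_n -> M) g (fK : cancel f g) i j :
  ed g i (eb f j) = (i == j)%:R.
Proof. by rewrite /ed /eb fK mxE eqxx. Qed.

Section Gen.
Variables (k : comPzRingType) (X : Type) (C : semiHopfCat k X).
Local Notation A := (Ahom C).
Local Notation m := (comp C _ _ _).
Variable s : forall x y, A x y -> A y x.
Hypothesis hs : forall x y, klinear (@s x y).
Hypothesis hsL : forall x y (a : A x y),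
  \sum_(p <- cmul C x y a) m p.1 (s p.2) = counit C x y a *: idm C x.
Hypothesis hsR : forall x y (a : A x y),
  \sum_(p <- cmul C x y a) m (s p.1) p.2 = counit C x y a *: idm C y.
Hypothesis hk : forall M : lmodType k, fg_projective M -> free_fin M.
Hypothesis hfg : forall x y, fg_projective (A x y).
Variable y : X.
Local Notation H := (A y y).

Lemma int_gen : exists t0 : H, is_int t0 /\ (forall t, is_int t -> exists c, t = c *: t0) /\
  (forall c : k, c *: t0 = 0 -> c = 0) /\
  exists phi, kform phi /\ act s t0 phi = idm C y.
Proof.
case: (eqVneq (1 : k) 0) => [e1|nz].
  exists 0; split; first by move=> a; rewrite comp0r scaler0.
  split; first by move=> t _; exists 0; rewrite scaler0; exact: triv_eq0.
  split; first by move=> c _; rewrite -[c]mulr1 e1 mulr0.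
  exists (fun _ => 0); split; first by move=> c u v; rewrite mulr0 addr0.
  by rewrite (triv_eq0 e1 (idm C y)); exact: triv_eq0.
have [n [f [hf [g fK gK]]]] := hk (hfg y y).
pose E := Pr s f g.
have hE : klinear E := Pr_lin hs hf fK gK.
have hEE : forall v, E (E v) = E v.
  by move=> v; apply: (Pr_id hs hsL hf fK gK); exact: (Pr_int hs hsL hsR hf fK gK).
have [r [be [hbe [be' beK be'K]]]] := hk (img_fgp hE hEE (hfg y y)).
have hbe' := klinear_inv hbe beK be'K.
pose b := fun j => img_val (be (delta_mx 0 j)).
have hed : forall l, kform (ed g l) := ed_form hf fK gK.
have bint : forall v : img E, is_int (img_val v).
  move=> v; rewrite -(img_fix v); exact: (Pr_int hs hsL hsR hf fK gK).
pose Th := fun M : 'M[k]_(r, n) => \sum_j act s (b j) (fun u => \sum_l M j l * ed g l u).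
pose Om := fun h : H => \matrix_(j, l) (be' (iP hEE (m (eb f l) h))) 0 j.
have hTh : klinear Th.
  move=> c M N; rewrite /Th scaler_sumr -big_split; apply: eq_bigr => j _ /=.
  rewrite !act_formsum scaler_sumr -big_split; apply: eq_bigr => l _ /=.
  by rewrite !mxE scalerDl scalerA.
have hOm : klinear Om.
  move=> c u v; apply/matrixP => j l; rewrite !mxE compDr compZr.
  by rewrite (klinD (klin_iP hE hEE)) (klinZ (klin_iP hE hEE)) (klinD hbe') (klinZ hbe') !mxE.
have valsum : forall w : 'rV[k]_r, img_val (be w) = \sum_j w 0 j *: b j.
  move=> w; rewrite {1}[w]row_sum_delta (klin_sum hbe) (klin_sum (@klin_img_val _ _ _ hE)).
  by apply: eq_bigr => j _; rewrite (klinZ hbe).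
have OmTh : forall M, Om (Th M) = M.
  move=> M; apply/matrixP => j l; rewrite mxE.
  have e : iP hEE (m (eb f l) (Th M)) = be (\row_j' M j' l).
    apply: img_val_inj; rewrite iP_val valsum /Th comp_sumr (klin_sum hE).
    apply: eq_bigr => j' _; rewrite mxE.
    have hform : kform (fun u => \sum_l0 M j' l0 * ed g l0 u).
      move=> c u v; rewrite mulr_sumr -big_split /=; apply: eq_bigr => l0 _.
      by rewrite (kformD (hed _)) (kformZ (hed _)); ring.
    rewrite /E (Pr_act hs hsL hsR hf fK gK (bint _) hform); congr (_ *: _).
    rewrite (bigD1 l) //= (ed_eb fK) eqxx mulr1 big1 ?addr0 // => l0 nl0.
    by rewrite (ed_eb fK) (negbTE nl0) mulr0.
  by rewrite e beK mxE.
have ThOm : forall h, Th (Om h) = h.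
  move=> h; rewrite /Th.
  under eq_bigr do rewrite act_formsum.
  rewrite exchange_big /= -[RHS](recon hs hsL hsR hf fK gK h); apply: eq_bigr => l _.
  have -> : Pr s f g (m (eb f l) h) = img_val (iP hEE (m (eb f l) h)) by [].
  rewrite -[iP _ _](be'K) valsum (klin_sum (act_lin hs (hed l))); apply: eq_bigr => j _.
  by rewrite (klinZ (act_lin hs (hed l))) mxE.
have hrank : has_rank H n by exists f; split=> //; exists g.
have rn := has_rank_iso_eq (has_rank_mx k r n) hrank hTh hOm OmTh ThOm nz.
have npos : (0 < n)%N.
  case: (posnP n) => [n0|//].
  have e : g (idm C y) = 0 by apply/rowP => i; have := ltn_ord i; rewrite {2}n0.
  move: nz; rewrite -(idm_counit _ _ C y) -(gK (idm C y)) e (klin0 hf).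
  by rewrite eps0 eqxx.
have r1 : r = 1%N by apply/eqP; rewrite -(eqn_pmul2r npos) mul1n rn.
subst r.
pose t0 := b ord0.
have repr : forall v : img E, img_val v = (be' v) 0 0 *: t0.
  move=> v; rewrite -{1}(be'K v) valsum big_ord1 //.
exists t0; split; first exact: bint.
split.
  move=> t ht; have Et : t \in Epred E.
    by rewrite inE; apply/eqP; exact: (Pr_id hs hsL hf fK gK).
  by exists (be' (Img Et) 0 0); rewrite -repr.
split.
  move=> c h0.
  have e : be (c *: delta_mx 0 ord0) = 0.
    apply: img_val_inj; by rewrite (klinZ hbe) (img_valZ hE) h0.
  have := congr1 be' e; rewrite beK (klin0 hbe') => /matrixP /(_ 0 0).
  by rewrite !mxE eqxx mulr1.
exists (fun u => \sum_l (be' (iP hEE (m (eb f l) (idm C y)))) 0 0 * ed g l u); split.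
  move=> c u v; rewrite mulr_sumr -big_split /=; apply: eq_bigr => l0 _.
  by rewrite (kformD (hed _)) (kformZ (hed _)); ring.
rewrite act_formsum -[RHS](recon hs hsL hsR hf fK gK (idm C y)); apply: eq_bigr => l _.
have -> : Pr s f g (m (eb f l) (idm C y)) = img_val (iP hEE (m (eb f l) (idm C y))) by [].
by rewrite repr (klinZ (act_lin hs (hed l))).
Qed.

End Gen.

Section Cons.
Variables (k : comPzRingType) (X : Type) (C : semiHopfCat k X).
Local Notation A := (Ahom C).
Local Notation m := (comp C _ _ _).
Variable s : forall x y, A x y -> A y x.
Hypothesis hs : forall x y, klinear (@s x y).
Hypothesis hsL : forall x y (a : A x y),
  \sum_(p <- cmul C x y a) m p.1 (s p.2) = counit C x y a *: idm C x.
Hypothesis hsR : forall x y (a : A x y),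
  \sum_(p <- cmul C x y a) m (s p.1) p.2 = counit C x y a *: idm C y.
Hypothesis hk : forall M : lmodType k, fg_projective M -> free_fin M.
Hypothesis hfg : forall x y, fg_projective (A x y).

Let sA := s_anti hs hsL hsR.
Let sDD := sD hs.
Let sZZ := sZ hs.

Lemma eps_one x y : exists a0 : A x y, (forall b : A x y, b = 0) \/ counit C x y a0 = 1.
Proof.
have [r [f [hf [g fK gK]]]] := hk (hfg x y).
move: f hf g fK gK; case: r => [|r] f hf g fK gK.
  exists 0; left => b; by rewrite -(gK b) (thinmx0 (g b)) (klin0 hf).
exists (\sum_(p <- cmul C x y (eb f ord0)) ed g ord0 p.2 *: p.1); right.
rewrite eps_sum.
transitivity (ed g ord0 (\sum_(p <- cmul C x y (eb f ord0)) counit C x y p.1 *: p.2)).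
  rewrite (kform_sum (ed_form hf fK gK ord0)); apply: eq_bigr => p _.
  by rewrite epsZ (kformZ (ed_form hf fK gK ord0)) mulrC.
by rewrite (counitL _ _ C) (ed_eb fK) eqxx.
Qed.

Lemma KL y (t : A y y) (ht : is_int t) z (a0 : A z y) (ha0 : counit C z y a0 = 1) (b : A z y) :
  m b t = counit C z y b *: m a0 t.
Proof.
rewrite -[in LHS](sw_epsR (G := fun u => m u t)); last by move=> c u v; rewrite compDl compZl.
transitivity (\sum_(p <- cmul C z y b) m (m p.1 (s p.2)) (m a0 t)).
  apply: eq_bigr => p _.
  have e : m (m (s p.2) a0) t = counit C z y p.2 *: t.
    by rewrite ht comp_counit (eps_s hs hsL) ha0 mulr1.
  by rewrite compA -(compA _ _ C _ _ _ _ (s p.2) a0 t) e compZr.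
by rewrite -comp_suml hsL compZl comp1m.
Qed.

Lemma left_family (t0 : forall y, A y y) (ht0 : forall y, is_int (t0 y))
  (a : forall x y, A x y) (ha : forall x y, (forall b : A x y, b = 0) \/ counit C x y (a x y) = 1) :
  left_integral C (fun x y => m (a x y) (t0 y)) /\ (forall y, m (a y y) (t0 y) = t0 y).
Proof.
split; last first.
  move=> y; case: (ha y y) => [z0|e1]; first by rewrite (z0 (t0 y)) comp0r.
  by rewrite ht0 e1 scale1r.
move=> x y z b /=.
case: (ha x y) => [z0|e1].
  rewrite (z0 (a x y)) comp0l comp0r.
  case: (ha z y) => [z1|e2]; first by rewrite (z1 (a z y)) comp0l scaler0.
  suff -> : counit C z x b = 0 by rewrite scale0r.
  have := congr1 (counit C x y) (z0 (m (s b) (a z y))).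
  by rewrite comp_counit (eps_s hs hsL) e2 mulr1 eps0.
rewrite -compA.
case: (ha z y) => [z1|e2].
  by rewrite (z1 (m b (a x y))) (z1 (a z y)) !comp0l scaler0.
by rewrite (KL (ht0 y) e2) comp_counit e1 mulr1.
Qed.

Lemma casimir_T (T : forall x y, A x y) (hT : left_integral C T) x y z (a : A z x)
  (P : lmodType k) (F : A z y -> A y x -> P) : kbilinear F ->
  \sum_(p <- cmul C x y (T x y)) F (m a p.1) (s p.2) =
  \sum_(p <- cmul C z y (T z y)) F p.1 (m (s p.2) a).
Proof.
move=> [hF1 hF2].
have hG : klinear (fun u : A z x => \sum_(p <- cmul C x y (T x y)) F (m u p.1) (s p.2)).
  move=> c u v; rewrite scaler_sumr -big_split; apply: eq_bigr => p _ /=.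
  by rewrite compDl compZl (klinD (hF1 _)) (klinZ (hF1 _)).
rewrite -(sw_epsR hG a).
transitivity (\sum_(q <- cmul C z x a) \sum_(q' <- cmul C z x q.2)
   \sum_(p <- cmul C x y (T x y)) F (m q.1 p.1) (m (s (m q'.1 p.2)) q'.2)).
  apply: eq_bigr => q _; rewrite exchange_big scaler_sumr; apply: eq_bigr => p _.
  rewrite -(klinZ (hF2 _)) -(klin_sum (hF2 _)); congr (F _ _).
  rewrite -[X in _ *: X]compm1 -compZr -hsR comp_sumr; apply: eq_bigr => q' _.
  by rewrite sA compA.
pose Phi := fun u1 u2 u3 : A z x =>
  \sum_(p <- cmul C x y (T x y)) F (m u1 p.1) (m (s (m u2 p.2)) u3).
have hPhi : ktrilinear Phi.
  rewrite /Phi; split; [|split] => ? ? c u v; rewrite scaler_sumr -big_split; apply: eq_bigr => p _ /=.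
  - by rewrite compDl compZl (klinD (hF1 _)) (klinZ (hF1 _)).
  - by rewrite compDl compZl sDD sZZ compDl compZl (klinD (hF2 _)) (klinZ (hF2 _)).
  - by rewrite compDr compZr (klinD (hF2 _)) (klinZ (hF2 _)).
have := coassoc3 hPhi a; rewrite /Phi => <-.
have hG2 : klinear (fun v : A z x => \sum_(p <- cmul C z y (T z y)) F p.1 (m (s p.2) v)).
  move=> c u v; rewrite scaler_sumr -big_split; apply: eq_bigr => p _ /=.
  by rewrite compDr compZr (klinD (hF2 _)) (klinZ (hF2 _)).
rewrite -(sw_epsL hG2 a); apply: eq_bigr => q _.
have hF' : kbilinear (fun U V : A z y => F U (m (s V) q.2)).
  split=> [V|U] c u v /=; first by rewrite (klinD (hF1 _)) (klinZ (hF1 _)).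
  by rewrite sDD sZZ compDl compZl (klinD (hF2 _)) (klinZ (hF2 _)).
transitivity (\sum_(p <- cmul C z y (m q.1 (T x y))) F p.1 (m (s p.2) q.2)).
  rewrite (comp_cmul' (F := fun U V => F U (m (s V) q.2))) //.
by rewrite hT (swZ (F := fun U V => F U (m (s V) q.2))).
Qed.

Lemma sum_delta n (c : 'I_n -> k) l : \sum_l' c l' * (delta_mx 0 l : 'rV[k]_n) 0 l' = c l.
Proof.
rewrite (bigD1 l) //= mxE !eqxx mulr1 big1 ?addr0 // => l' nl.
by rewrite mxE eqxx (negbTE nl) mulr0.
Qed.

Lemma sum_delta' n (c : 'I_n -> k) l : \sum_l' (delta_mx 0 l : 'rV[k]_n) 0 l' * c l' = c l.
Proof. rewrite -[RHS](sum_delta c l); apply: eq_bigr => l' _; exact: mulrC. Qed.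

Section Fam.
Variable T : forall x y, A x y.
Hypothesis hT : left_integral C T.
Variable y : X.
Variable phi : A y y -> k.
Hypothesis hphi : kform phi.
Hypothesis hN : \sum_(p <- cmul C y y (T y y)) phi (s p.2) *: p.1 = idm C y.

Lemma F1 h : \sum_(p <- cmul C y y (T y y)) phi (m (s p.2) h) *: p.1 = h.
Proof.
rewrite -(casimir_T hT h (F := fun U V => phi V *: U)) //; last first.
  split=> [V|U] c u v /=; first by rewrite scalerDr scalerA mulrC -scalerA.
  by rewrite (kformD hphi) (kformZ hphi) scalerDl scalerA.
transitivity (m h (\sum_(p <- cmul C y y (T y y)) phi (s p.2) *: p.1)).
  by rewrite comp_sumr; apply: eq_bigr => p _; rewrite compZr.
by rewrite hN compm1.
Qed.

Lemma F2 : \sum_(p <- cmul C y y (T y y)) phi p.1 *: s p.2 = idm C y.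
Proof.
have [n [f [hf [g fK gK]]]] := hk (hfg y y).
have hed := ed_form hf fK gK.
pose Ph := fun w : 'rV[k]_n =>
  \sum_(p <- cmul C y y (T y y)) (\sum_l w 0 l * ed g l (s p.2)) *: p.1.
pose Ps := fun h : A y y => \row_l phi (m (eb f l) h).
have hPh : klinear Ph.
  move=> c u v; rewrite /Ph scaler_sumr -big_split; apply: eq_bigr => p _ /=.
  rewrite scalerA -scalerDl; congr (_ *: _).
  rewrite mulr_sumr -big_split; apply: eq_bigr => l _ /=; rewrite !mxE; ring.
have hPs : klinear Ps.
  move=> c u v; apply/rowP => l; rewrite !mxE compDr compZr (kformD hphi) (kformZ hphi).
  by [].
have PhPs : forall h, Ph (Ps h) = h.
  move=> h; rewrite /Ph -[RHS]F1; apply: eq_bigr => p _; congr (_ *: _).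
  rewrite [in RHS](expand hf gK (s p.2)) comp_suml (kform_sum hphi).
  by apply: eq_bigr => l _; rewrite mxE compZl (kformZ hphi) mulrC.
have hrk1 : has_rank 'rV[k]_n n by exists id; split=> //; exists id.
have hrk2 : has_rank (A y y) n by exists f; split=> //; exists g.
have PsPh := rank_surj_inj hrk1 hrk2 hPh hPs PhPs.
have key : forall w u, phi (m u (Ph w)) = \sum_l ed g l u * w 0 l.
  move=> w u; rewrite {1}(expand hf gK u) comp_suml (kform_sum hphi).
  apply: eq_bigr => l _; rewrite compZl (kformZ hphi); congr (_ * _).
  by have := PsPh w; move/rowP => /(_ l); rewrite mxE.
rewrite [RHS](expand hf gK); rewrite [LHS](expand hf gK); apply: eq_bigr => l _.
congr (_ *: _).
transitivity (phi (Ph (delta_mx 0 l))).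
  rewrite (kform_sum (hed l)) /Ph (kform_sum hphi); apply: eq_bigr => p _.
  by rewrite (kformZ (hed l)) (kformZ hphi) sum_delta' mulrC.
rewrite -[Ph _]comp1m key; under eq_bigr do rewrite mulrC.
exact: (sum_delta' (fun i => ed g i (idm C y))).
Qed.

Lemma F3 h : s (\sum_(p <- cmul C y y (T y y)) phi (m h p.1) *: p.2) = h.
Proof.
rewrite (klin_sum (@hs _ _)); under eq_bigr do rewrite sZZ.
rewrite (casimir_T hT h (F := fun U V => phi U *: V)) //; last first.
  split=> [V|U] c u v /=; last by rewrite scalerDr scalerA mulrC -scalerA.
  by rewrite (kformD hphi) (kformZ hphi) scalerDl scalerA.
transitivity (m (\sum_(p <- cmul C y y (T y y)) phi p.1 *: s p.2) h).
  by rewrite comp_suml; apply: eq_bigr => p _; rewrite compZl.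
by rewrite F2 comp1m.
Qed.

Lemma F4 a : \sum_(p <- cmul C y y (T y y)) phi (m (s a) p.1) *: p.2 = a.
Proof.
have [n [f [hf [g fK gK]]]] := hk (hfg y y).
have hrk : has_rank (A y y) n by exists f; split=> //; exists g.
pose R := fun h : A y y => \sum_(p <- cmul C y y (T y y)) phi (m h p.1) *: p.2.
have hR : klinear R.
  move=> c u v; rewrite /R scaler_sumr -big_split; apply: eq_bigr => p _ /=.
  by rewrite compDl compZl (kformD hphi) (kformZ hphi) scalerDl scalerA.
exact: (rank_surj_inj hrk hrk (@hs y y) hR F3 a).
Qed.

End Fam.
End Cons.

Section Master.
Variables (k : comPzRingType) (X : Type) (C : semiHopfCat k X).
Local Notation A := (Ahom C).
Local Notation m := (comp C _ _ _).
Hypothesis hk : forall M : lmodType k, fg_projective M -> free_fin M.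
Hypothesis hfg : forall x y, fg_projective (A x y).

Lemma Hopf_master : is_Hopf C ->
  exists T : forall x y, A x y, left_integral C T /\ nonsingular C T /\
    is_Frobenius C /\ (forall x, lint_iso_k C x).
Proof.
move=> [s [hs [hsL hsR]]].
have sDD := sD hs; have sZZ := sZ hs.
have [d hd] := @dchoice X (fun y => (A y y * (A y y -> k))%type)
  (fun y d => is_int d.1 /\ (forall t, is_int t -> exists c, t = c *: d.1) /\
    (forall c : k, c *: d.1 = 0 -> c = 0) /\ kform d.2 /\ act s d.1 d.2 = idm C y)
  (fun y => let: ex_intro t0 (conj h1 (conj h2 (conj h3 (ex_intro phi (conj h4 h5))))) :=
     int_gen hs hsL hsR hk hfg y in ex_intro _ (t0, phi) (conj h1 (conj h2 (conj h3 (conj h4 h5))))).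
have [a ha] := @dchoice X (fun x => forall y, A x y)
  (fun x ax => forall y, (forall b : A x y, b = 0) \/ counit C x y (ax y) = 1)
  (fun x => @dchoice X (fun y => A x y) _ (fun y => eps_one hk hfg x y)).
pose T := fun x y => m (a x y) (d y).1.
have [hT hTy] := left_family hs hsL (fun y => (hd y).1) ha.
have hN : forall y, \sum_(p <- cmul C y y (T y y)) (d y).2 (s _ _ p.2) *: p.1 = idm C y.
  by move=> y; rewrite /T hTy; exact: (hd y).2.2.2.2.
have hphi : forall y, kform (d y).2 := fun y => (hd y).2.2.2.1.
exists T; split=> //; split.
  split=> x.
    exists (fun a u => (d x).2 (m (s _ _ a) u)); split.
      by move=> a0 c u v; rewrite compDr compZr (kformD (hphi x)) (kformZ (hphi x)).
    split; first by move=> c a1 b1 u; rewrite sDD sZZ compDl compZl (kformD (hphi x)) (kformZ (hphi x)).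
    exact: (F4 hs hsL hsR hk hfg hT (hphi x) (hN x)).
  exists (fun a u => (d x).2 (m (s _ _ u) a)); split.
    by move=> a0 c u v; rewrite sDD sZZ compDl compZl (kformD (hphi x)) (kformZ (hphi x)).
  split; first by move=> c a1 b1 u; rewrite compDr compZr (kformD (hphi x)) (kformZ (hphi x)).
  exact: (F1 hs hsL hsR hT (hphi x) (hN x)).
split.
  exists (fun x y => [seq (p.1, s _ _ p.2) | p <- cmul C x y (T x y)]), (fun x => (d x).2).
  split.
    move=> x y z a0 P F hF; rewrite -!map_comp !big_map /=.
    exact: (casimir_T hs hsL hsR hT a0 hF).
  split=> //; split=> x; rewrite big_map /=.
    exact: (F2 hs hsL hsR hk hfg hT (hphi x) (hN x)).
  exact: hN.
move=> z; exists (fun y => T y z); split.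
  by move=> x y b; exact: hT.
split.
  move=> t ht.
  have htz : is_int (t z) by move=> b; exact: ht.
  have [c hc] := (hd z).2.1 _ htz.
  exists c => y; case: (ha y z) => [z0|e1]; first by rewrite (z0 (t y)) (z0 (T y z)) scaler0.
  by rewrite -[t y]scale1r -e1 -ht hc compZr.
move=> c h0; apply: (hd z).2.2.1; have := h0 z; by rewrite /T hTy.
Qed.

End Master.

Section OpCop.
Variables (k : comPzRingType) (X : Type) (C : semiHopfCat k X).
Local Notation A := (Ahom C).

Definition oA (x y : X) : lmodType k := A y x.
Definition ocomp x y z (a : oA x y) (b : oA y z) : oA x z := comp C z y x b a.
Definition oidm x : oA x x := idm C x.
Definition ocmul x y (a : oA x y) : seq (oA x y * oA x y) := [seq (p.2, p.1) | p <- cmul C y x a].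
Definition ocounit x y (a : oA x y) : k := counit C y x a.

Lemma ocomp_bilin x y z : kbilinear (@ocomp x y z).
Proof. by split=> [n|m0]; [exact: (comp_bilin _ _ C z y x).2 | exact: (comp_bilin _ _ C z y x).1]. Qed.

Lemma ocompA x y z w (a : oA x y) (b : oA y z) (c : oA z w) :
  ocomp (ocomp a b) c = ocomp a (ocomp b c).
Proof. by rewrite /ocomp compA. Qed.

Lemma ocomp1m x y (a : oA x y) : ocomp (oidm x) a = a.
Proof. exact: compm1. Qed.
Lemma ocompm1 x y (a : oA x y) : ocomp a (oidm y) = a.
Proof. exact: comp1m. Qed.

Lemma ocmul_lin x y (c : k) (a b : oA x y) :
  teq2 (ocmul (c *: a + b)) ([seq (c *: p.1, p.2) | p <- ocmul a] ++ ocmul b).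
Proof.
move=> P F hF; rewrite /ocmul big_cat !big_map /=.
have hF' : kbilinear (fun u v => F v u) by split=> [n|m0]; [exact: hF.2 | exact: hF.1].
rewrite (cmul_lin _ _ C y x c a b P _ hF') big_cat !big_map /=; congr (_ + _).
apply: eq_bigr => p _; by rewrite (klinZ (hF.1 _)) (klinZ (hF.2 _)).
Qed.

Lemma ocounit_lin x y : kform (@ocounit x y).
Proof. exact: counit_lin. Qed.

Lemma ocoassoc x y (a : oA x y) :
  teq3 [seq (q.1, q.2, p.2) | p <- ocmul a, q <- ocmul p.1]
       [seq (p.1, q.1, q.2) | p <- ocmul a, q <- ocmul p.2].
Proof.
move=> P F hF; rewrite !big_allpairs_dep /ocmul !big_map /=.
under eq_bigr do rewrite big_map /=.
under [RHS]eq_bigr do rewrite big_map /=.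
pose G := fun u1 u2 u3 : A y x => F u3 u2 u1.
have hG : ktrilinear G.
  case: hF => h1 [h2 h3]; split; [|split] => ? ?; rewrite /G; [exact: h3 | exact: h2 | exact: h1].
have := coassoc3 hG a; rewrite /G => ->.
done.
Qed.

Lemma ocounitL x y (a : oA x y) : \sum_(p <- ocmul a) ocounit p.1 *: p.2 = a.
Proof. by rewrite /ocmul big_map /=; exact: counitR. Qed.
Lemma ocounitR x y (a : oA x y) : \sum_(p <- ocmul a) ocounit p.2 *: p.1 = a.
Proof. by rewrite /ocmul big_map /=; exact: counitL. Qed.

Lemma ocomp_cmul x y z (a : oA x y) (b : oA y z) :
  teq2 (ocmul (ocomp a b))
       [seq (ocomp p.1 q.1, ocomp p.2 q.2) | p <- ocmul a, q <- ocmul b].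
Proof.
move=> P F hF; rewrite big_allpairs_dep /ocmul /ocomp !big_map /=.
have hF' : kbilinear (fun u v => F v u) by split=> [n|m0]; [exact: hF.2 | exact: hF.1].
rewrite (comp_cmul' (F := fun u v => F v u)) // exchange_big /=.
by apply: eq_bigr => p _; rewrite big_map.
Qed.

Lemma ocomp_counit x y z (a : oA x y) (b : oA y z) :
  ocounit (ocomp a b) = ocounit a * ocounit b.
Proof. by rewrite /ocounit /ocomp comp_counit mulrC. Qed.

Lemma oidm_cmul x : teq2 (ocmul (oidm x)) [:: (oidm x, oidm x)].
Proof.
move=> P F hF; rewrite /ocmul big_map big_seq1 /=.
have hF' : kbilinear (fun u v => F v u) by split=> [n|m0]; [exact: hF.2 | exact: hF.1].
exact: (idm_cmul' (F := fun u v => F v u)).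
Qed.

Lemma oidm_counit x : ocounit (oidm x) = 1.
Proof. exact: idm_counit. Qed.

Definition opcop : semiHopfCat k X :=
  @SemiHopfCat k X oA (@ocomp) oidm (@ocmul) (@ocounit) ocomp_bilin ocompA ocomp1m ocompm1
    ocmul_lin ocounit_lin ocoassoc ocounitL ocounitR ocomp_cmul ocomp_counit
    oidm_cmul oidm_counit.

Lemma opcop_Hopf : is_Hopf C -> is_Hopf opcop.
Proof.
move=> [s [hs [hsL hsR]]]; exists (fun x y (a : oA x y) => s y x a).
split; first by move=> x y; exact: hs.
split=> x y a /=; rewrite /ocmul big_map /=; rewrite /ocomp.
  exact: hsR.
exact: hsL.
Qed.

Lemma opcop_fg : (forall x y, fg_projective (A x y)) -> forall x y, fg_projective (Ahom opcop x y).
Proof. by move=> h x y; exact: h. Qed.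

Lemma opcop_right T : left_integral opcop T -> right_integral C (fun x y => T y x).
Proof. by move=> h x y z a; exact: (h y x z a). Qed.

Lemma opcop_nonsingular T : nonsingular opcop T -> nonsingular C (fun x y => T y x).
Proof.
move=> [hl hr]; split=> x.
  have [g [h1 [h2 h3]]] := hr x; exists g; split=> //; split=> // a.
  by have := h3 a; rewrite /= /ocmul big_map.
have [g [h1 [h2 h3]]] := hl x; exists g; split=> //; split=> // a.
by have := h3 a; rewrite /= /ocmul big_map.
Qed.

End OpCop.

Theorem mainTheorem10 (k : comPzRingType)
  (hk : forall M : lmodType k, fg_projective M -> free_fin M)
  (X : Type) (C : semiHopfCat k X)
  (hfg : forall x y, fg_projective (Ahom C x y)) :
  [<-> (* (a) *) is_Hopf C /\ (exists t, right_integral C t /\ nonsingular C t);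
       (* (b) *) (exists t, right_integral C t /\ nonsingular C t) /\
                 (exists t, left_integral C t /\ nonsingular C t);
       (* (c) *) is_Hopf C /\ is_Frobenius C;
       (* (d) *) is_Hopf C /\ (forall x, lint_iso_k C x);
       (* (e) *) (exists t, left_integral C t /\ right_nonsingular C t) /\ same_rank_cond C;
       (* (f) *) is_Hopf C].
Proof.
have master := Hopf_master hk hfg.
have rightfam : is_Hopf C -> exists t, right_integral C t /\ nonsingular C t.
  move=> hH.
  have [T [hT [hns _]]] := Hopf_master hk (opcop_fg hfg) (opcop_Hopf hH).
  exists (fun x y => T y x); split; [exact: opcop_right | exact: opcop_nonsingular].
tfae.
- move=> [hH hR]; split=> //.
  have [T [hT [hns _]]] := master hH; by exists T.
- move=> [[t [ht [htl _]]] [t' [ht' [_ htr]]]].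
  have hH := b_to_Hopf (ex_intro _ t (conj ht htl)) (ex_intro _ t' (conj ht' htr)).
  have [T [_ [_ [hF _]]]] := master hH; by split.
- move=> [hH _]; split=> //.
  by have [T [_ [_ [_ hl]]]] := master hH.
- move=> [hH _]; split; last exact: (Hopf_same_rank hk hfg hH).
  have [T [hT [[_ hr] _]]] := master hH; by exists T.
- move=> [he hsr]; exact: (e_to_Hopf he hsr).
- move=> hH; split=> //; exact: rightfam.
Qed.
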